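(* Let $G$ be an infinite locally finite graph, $D$ a finite connected graph, and $G'=G\square D$, where $G$ is identified with one of its copies $G\times\{x_0\}$ ($x_0\in V(D)$) in $G'$. Let $\alpha$ be an end of $G$ and $\alpha'$ the end of $G'$ with $\alpha\subseteq\alpha'$. Then $d(\alpha')=d(\alpha)\,|V(D)|$.
   Context: $\square$ denotes the Cartesian product. A ray is a one-way infinite path; two rays of a graph $H$ are equivalent in $H$ if for every finite $S\subseteq V(H)$ some component of $H-S$ contains tails of both; the classes are the ends of $H$. The degree $d(\alpha)$ of an end is the maximum number of pairwise vertex-disjoint rays in $\alpha$. *)

(* Defs.v *)
From Stdlib Require List.
From mathcomp Require Import all_boot.
Set Implicit Arguments. Unset Strict Implicit. Unset Printing Implicit Defensive.

Section Graphs.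
Variables (V : Type) (adj : V -> V -> Prop).

Definition simple_graph : Prop :=
  (forall u v, adj u v -> adj v u) /\ (forall v, ~ adj v v).

Definition locally_finite : Prop :=
  forall v, exists l : list V, forall w, adj v w -> List.In w l.

Definition infinite_graph : Prop :=
  ~ exists l : list V, forall v, List.In v l.

Definition is_ray (r : nat -> V) : Prop :=
  (forall n m, r n = r m -> n = m) /\ (forall n, adj (r n) (r n.+1)).

Inductive conn_avoid (S : list V) : V -> V -> Prop :=
| ca_refl v : ~ List.In v S -> conn_avoid S v v
| ca_step u v w : ~ List.In u S -> adj u v -> conn_avoid S v w -> conn_avoid S u w.

Definition ray_equiv (r1 r2 : nat -> V) : Prop :=
  forall S : list V, exists k, forall n m, k <= n -> k <= m ->
    conn_avoid S (r1 n) (r2 m).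

Definition is_end (alpha : (nat -> V) -> Prop) : Prop :=
  exists r0, is_ray r0 /\
    forall r, alpha r <-> (is_ray r /\ ray_equiv r0 r).

Definition k_disjoint_rays (alpha : (nat -> V) -> Prop) (k : nat) : Prop :=
  exists f : nat -> nat -> V,
    (forall i, i < k -> alpha (f i)) /\
    (forall i j, i < k -> j < k -> i <> j -> forall n m, f i n <> f j m).

(* degree of an end, in nat ∪ {∞}: Some k = k, None = ∞ (maximum = supremum) *)
Definition end_degree (alpha : (nat -> V) -> Prop) (d : option nat) : Prop :=
  match d with
  | Some k => k_disjoint_rays alpha k /\ ~ k_disjoint_rays alpha k.+1
  | None => forall k, k_disjoint_rays alpha k
  end.

End Graphs.

Definition cart_adj (V : Type) (adj : V -> V -> Prop) (T : Type) (e : rel T)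
  (p q : V * T) : Prop :=
  (p.1 = q.1 /\ e p.2 q.2) \/ (adj p.1 q.1 /\ p.2 = q.2).

Definition odeg_mul (d : option nat) (n : nat) : option nat :=
  match d with Some k => Some (k * n) | None => None end.

(* Main.v *)
Require Import Defs.
From Stdlib Require Import List Arith Lia Classical ClassicalEpsilon ListDec.

Module Dev.
Import ListNotations.

Definition dP (P : Prop) : {P} + {~P} := excluded_middle_informative P.

Section Gen.
Context {V : Type}.

Definition deq (x y : V) : {x = y} + {x <> y} := dP (x = y).

Inductive wk (R : V -> V -> Prop) : list V -> Prop :=
| wk1 v : wk R [v]
| wk2 u v l : R u v -> wk R (v :: l) -> wk R (u :: v :: l).

Definition avoid (w Y : list V) := forall v, In v w -> ~ In v Y.

Definition AB R (A B : list V) (w : list V) :=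
  wk R w /\ (exists a t, w = a :: t /\ In a A) /\ (exists h b, w = h ++ [b] /\ In b B).

Lemma wk_nil R : ~ wk R [].
Proof. intro H; inversion H. Qed.

Lemma wk_mono (R R' : V -> V -> Prop) w :
  (forall u v, R u v -> R' u v) -> wk R w -> wk R' w.
Proof. intros H W; induction W; constructor; auto. Qed.

Lemma wk_app R p z q : wk R (p ++ [z]) -> wk R (z :: q) -> wk R (p ++ z :: q).
Proof.
  induction p as [|a p IH]; simpl; intros H1 H2; auto.
  destruct p as [|b p]; simpl in *.
  - inversion H1; subst. constructor; auto.
  - inversion H1; subst. constructor; auto.
Qed.

Lemma wk_splitl R p z q : wk R (p ++ z :: q) -> wk R (p ++ [z]).
Proof.
  induction p as [|a p IH]; simpl; intros H.
  - constructor.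
  - destruct p as [|b p]; simpl in *.
    + inversion H; subst. constructor; auto; constructor.
    + inversion H; subst. constructor; auto.
Qed.

Lemma wk_splitr R p z q : wk R (p ++ z :: q) -> wk R (z :: q).
Proof.
  induction p as [|a p IH]; simpl; intros H; auto.
  apply IH. destruct p; simpl in *; inversion H; subst; auto.
Qed.

Lemma first_hit (Z w : list V) : (exists v, In v w /\ In v Z) ->
  exists p z q, w = p ++ z :: q /\ In z Z /\ avoid p Z.
Proof.
  induction w as [|a w IH]; intros [v [Hv HZ]]; [destruct Hv|].
  destruct (dP (In a Z)) as [Ha|Ha].
  - exists [], a, w. split; auto. split; auto. intros x [].
  - destruct Hv as [<-|Hv]; [contradiction|].
    destruct IH as [p [z [q [E [Hz Hp]]]]]; eauto.
    exists (a :: p), z, q. subst. split; auto. split; auto.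
    intros x [<-|Hx]; auto.
Qed.

Lemma last_hit (Z w : list V) : (exists v, In v w /\ In v Z) ->
  exists p z q, w = p ++ z :: q /\ In z Z /\ avoid q Z.
Proof.
  induction w as [|a w IH]; intros [v [Hv HZ]]; [destruct Hv|].
  destruct (dP (exists v, In v w /\ In v Z)) as [Hw|Hw].
  - destruct (IH Hw) as [p [z [q [E [Hz Hq]]]]].
    exists (a :: p), z, q. subst. auto.
  - exists [], a, w. destruct Hv as [<-|Hv].
    + split; auto. split; auto. intros x Hx HxZ. apply Hw; eauto.
    + exfalso; apply Hw; eauto.
Qed.

Lemma first_bad (R R' : V -> V -> Prop) w : wk R w -> ~ wk R' w ->
  exists p u v q, w = p ++ u :: v :: q /\ wk R' (p ++ [u]) /\ R u v /\ ~ R' u v.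
Proof.
  induction 1 as [v|u v l Ruv W IH]; intros N.
  - exfalso; apply N; constructor.
  - destruct (dP (R' u v)) as [H|H].
    + assert (N' : ~ wk R' (v :: l)) by (intro; apply N; constructor; auto).
      destruct (IH N') as [p [u' [v' [q [E [W' [H1 H2]]]]]]].
      exists (u :: p), u', v', q. rewrite E. split; [reflexivity|]. split; auto.
      destruct p as [|b p]; simpl in *.
      * inversion E; subst. constructor; auto; constructor.
      * inversion E; subst. constructor; auto.
    + exists [], u, v, l. simpl. split; auto. split; auto. constructor.
Qed.

Lemma last_bad (R R' : V -> V -> Prop) w : wk R w -> ~ wk R' w ->
  exists p u v q, w = p ++ u :: v :: q /\ wk R' (v :: q) /\ R u v /\ ~ R' u v.
Proof.
  induction 1 as [v|u v l Ruv W IH]; intros N.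
  - exfalso; apply N; constructor.
  - destruct (dP (wk R' (v :: l))) as [H|H].
    + exists [], u, v, l. simpl. split; auto. split; auto. split; auto.
      intro; apply N; constructor; auto.
    + destruct (IH H) as [p [u' [v' [q [E [W' [H1 H2]]]]]]].
      exists (u :: p), u', v', q. rewrite E. auto.
Qed.

Lemma incl_before (l p q : list V) z u v :
  l ++ [z] = p ++ u :: v :: q -> incl (p ++ [u]) l.
Proof.
  intros E. destruct (exists_last (l := v :: q)) as [q' [z' E2]]; [discriminate|].
  rewrite E2 in E. rewrite app_comm_cons, app_assoc in E.
  apply app_inj_tail in E as [E _]. subst l.
  intros x Hx. apply in_app_or in Hx as [Hx|[<-|[]]]; apply in_or_app; simpl; auto.
Qed.

Lemma incl_after (l p q : list V) z u v :
  z :: l = p ++ u :: v :: q -> incl (v :: q) l.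
Proof.
  intros E. destruct p as [|a p]; simpl in E; inversion E; subst.
  - intros x Hx; simpl; auto.
  - intros x Hx. apply in_or_app. right. simpl. auto.
Qed.

End Gen.

Lemma choice_fun {A B : Type} (P : A -> B -> Prop) :
  (forall a, exists b, P a b) -> exists f : A -> B, forall a, P a (f a).
Proof.
  intros H. exists (fun a => proj1_sig (constructive_indefinite_description _ (H a))).
  intro a. exact (proj2_sig (constructive_indefinite_description _ (H a))).
Qed.

Section Fam.
Context {V : Type}.
Implicit Types (R : V -> V -> Prop) (A B Y Z : list V) (w : list V).

Definition fam R (A B : list V) (F : list (list V)) :=
  NoDup F /\ (forall w1 w2, In w1 F -> In w2 F -> w1 <> w2 -> forall v, In v w1 -> ~ In v w2)
  /\ forall w, In w F -> AB R A B w.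

Lemma NoDup_map_on {X Y : Type} (f : X -> Y) (l : list X) :
  NoDup l -> (forall a b, In a l -> In b l -> f a = f b -> a = b) -> NoDup (map f l).
Proof.
  induction 1 as [|a l Ha Hl IH]; intros Hf; simpl; constructor.
  - intros Hin. apply in_map_iff in Hin as [b [Hb Hbl]].
    assert (b = a) by (apply Hf; simpl; auto). subst; contradiction.
  - apply IH. intros; apply Hf; simpl; auto.
Qed.

Lemma AB_nonnil R A B w : AB R A B w -> w <> [].
Proof. intros [W _] ->. inversion W. Qed.

Lemma fam_map R R' A B A' B' F (f : list V -> list V) :
  fam R A B F ->
  (forall w, In w F -> AB R' A' B' (f w)) ->
  (forall w1 w2, In w1 F -> In w2 F -> w1 <> w2 -> forall v, In v (f w1) -> ~ In v (f w2)) ->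
  fam R' A' B' (map f F).
Proof.
  intros [ND [D H]] HAB HD. split; [|split].
  - apply NoDup_map_on; auto. intros a b Ha Hb E.
    destruct (dP (a = b)) as [|N]; auto. exfalso.
    assert (Hne := AB_nonnil _ _ _ _ (HAB a Ha)).
    destruct (f a) as [|v t] eqn:Ea; [contradiction|].
    apply (HD a b Ha Hb N v); [rewrite Ea; simpl; auto| rewrite <- E; simpl; auto].
  - intros g1 g2 H1 H2 N v. apply in_map_iff in H1 as [w1 [<- H1]].
    apply in_map_iff in H2 as [w2 [<- H2]].
    apply HD; auto. intros ->; auto.
  - intros g Hg. apply in_map_iff in Hg as [w [<- Hw]]. auto.
Qed.

Lemma fam_mono R R' A B F : (forall u v, R u v -> R' u v) -> fam R A B F -> fam R' A B F.
Proof.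
  intros HR [ND [D H]]. split; [|split]; auto.
  intros w Hw. destruct (H w Hw) as [W X]. split; auto. eapply wk_mono; eauto.
Qed.

Lemma fam_cover R A B F : fam R A B F -> NoDup A -> length A <= length F ->
  forall a, In a A -> exists w t, In w F /\ w = a :: t.
Proof.
  intros [ND [D H]] NA L a Ha.
  assert (Hh : forall w, In w F -> In (hd a w) A /\ In (hd a w) w).
  { intros w Hw. destruct (H w Hw) as [_ [[a' [t [E Ha']]] _]]. subst; simpl; auto. }
  assert (NDh : NoDup (map (hd a) F)).
  { apply NoDup_map_on; auto. intros w1 w2 H1 H2 E.
    destruct (dP (w1 = w2)) as [|N]; auto. exfalso.
    apply (D w1 w2 H1 H2 N (hd a w1)); [apply Hh; auto| rewrite E; apply Hh; auto]. }
  assert (I : incl A (map (hd a) F)).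
  { apply NoDup_length_incl; auto. rewrite length_map; auto.
    intros v Hv. apply in_map_iff in Hv as [w [<- Hw]]. apply Hh; auto. }
  apply I in Ha. apply in_map_iff in Ha as [w [E Hw]].
  destruct (H w Hw) as [_ [[a' [t [E' _]]] _]]. subst w. simpl in E. subst a'. exists (a :: t), t. auto.
Qed.

Lemma last_of_suffix (l h p s : list V) b : l = h ++ [b] -> l = p ++ s -> s <> [] ->
  exists h', s = h' ++ [b].
Proof.
  intros E1 E2 N. destruct (exists_last N) as [h' [b' ->]].
  rewrite E2, app_assoc in E1. apply app_inj_tail in E1 as [_ ->]. eauto.
Qed.

Lemma head_of_prefix (l t s r : list V) a : l = a :: t -> l = s ++ r -> s <> [] ->
  exists t', s = a :: t'.
Proof.
  intros E1 E2 N. destruct s as [|a' s]; [contradiction|]. simpl in E2. rewrite E1 in E2.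
  inversion E2; subst; eauto.
Qed.

Lemma avoid_incl (w w' Y : list V) : incl w' w -> avoid w Y -> avoid w' Y.
Proof. intros I A v Hv; apply A, I, Hv. Qed.

Lemma avoid_app (w w' Y : list V) : avoid w Y -> avoid w' Y -> avoid (w ++ w') Y.
Proof. intros A1 A2 v Hv. apply in_app_or in Hv as [|]; auto. Qed.

Lemma AB_join R A Z Z' B h z t :
  AB R A Z (h ++ [z]) -> AB R Z' B (z :: t) -> AB R A B (h ++ z :: t).
Proof.
  intros [W1 [[a [t1 [E1 Ha]]] _]] [W2 [_ [h2 [b [E2 Hb]]]]].
  split; [apply wk_app; auto|split].
  - destruct h as [|c h]; simpl in *; inversion E1; subst; eauto.
  - exists (h ++ h2), b. rewrite E2, app_assoc. auto.
Qed.

Lemma AB_prefix R A B B' p z q :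
  AB R A B (p ++ z :: q) -> In z B' -> AB R A B' (p ++ [z]).
Proof.
  intros [W [[a [t [E Ha]]] _]] Hz. split; [eapply wk_splitl; eauto|split; eauto].
  destruct (head_of_prefix _ _ (p ++ [z]) q _ E) as [t' ->].
  - rewrite <- app_assoc; auto.
  - destruct p; discriminate.
  - eauto.
Qed.

Lemma AB_suffix R A A' B p z q :
  AB R A B (p ++ z :: q) -> In z A' -> AB R A' B (z :: q).
Proof.
  intros [W [_ [h [b [E Hb]]]]] Hz. split; [eapply wk_splitr; eauto|split; eauto].
  destruct (last_of_suffix _ _ p (z :: q) _ E) as [h' E']; auto; try discriminate.
  eauto.
Qed.

Lemma AB_tail_walk R A B w : AB R A B w -> exists h b, w = h ++ [b] /\ In b B.
Proof. intros [_ [_ H]]; exact H. Qed.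

End Fam.

Section Core.
Context {V : Type}.
Implicit Types (A B Y Z : list V) (w : list V).
Variables (R R' : V -> V -> Prop) (x y : V).
Hypothesis hR : forall u v, R u v <-> R' u v \/ (u = x /\ v = y) \/ (u = y /\ v = x).
Hypothesis hxy : x <> y.
Hypothesis IH' : forall k A B, (forall Y, length Y < k -> exists w, AB R' A B w /\ avoid w Y) ->
  exists F, length F = k /\ fam R' A B F.
Variables (k : nat) (A B S : list V).
Hypothesis H1 : forall Y, length Y < k -> exists w, AB R A B w /\ avoid w Y.
Hypothesis H2 : ~ exists w, AB R' A B w /\ avoid w S.
Hypothesis H3 : length S < k.
Hypothesis HS : NoDup S.
Hypothesis H4 : exists w, AB R' A [x] w /\ avoid w S.

Lemma R'R u v : R' u v -> R u v.
Proof. intro; apply hR; auto. Qed.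

Lemma badR u v : R u v -> ~ R' u v -> (u = x /\ v = y) \/ (u = y /\ v = x).
Proof. intros H N. apply hR in H as [H|H]; [contradiction|auto]. Qed.

Lemma AB_wk R1 R2 A1 B1 w : AB R1 A1 B1 w -> wk R2 w -> AB R2 A1 B1 w.
Proof. intros [_ X] W; split; auto. Qed.

Lemma AB_up A1 B1 w : AB R' A1 B1 w -> AB R A1 B1 w.
Proof. intros [W X]; split; auto. eapply wk_mono; [apply R'R|auto]. Qed.

Lemma H5 : exists t, AB R' [y] B (y :: t) /\ avoid (y :: t) S.
Proof.
  destruct (H1 S H3) as [W [HW AW]].
  assert (NW : ~ wk R' W) by (intro Hw; apply H2; exists W; split; auto; eapply AB_wk; eauto).
  destruct (last_bad R R' W (proj1 HW) NW) as [p [u [v [q [E [W' [Ruv NR]]]]]]].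
  assert (HV : AB R' [v] B (v :: q)).
  { apply AB_wk with R; auto. apply AB_suffix with A (p ++ [u]).
    - rewrite <- app_assoc. simpl. rewrite <- E. auto.
    - simpl; auto. }
  assert (AV : avoid (v :: q) S).
  { apply avoid_incl with W; auto. rewrite E. intros a Ha. apply in_or_app. simpl. auto. }
  destruct (badR _ _ Ruv NR) as [[-> ->]|[-> ->]]; eauto.
  exfalso. destruct H4 as [w4 [Hw4 Aw4]].
  destruct (AB_tail_walk _ _ _ _ Hw4) as [h [b [E4 Hb]]]. destruct Hb as [<-|[]].
  apply H2. exists (h ++ x :: q). split.
  - apply AB_join with [x] [x]; [rewrite <- E4|]; auto.
  - apply avoid_app; [|auto]. intros a Ha; apply Aw4. rewrite E4. apply in_or_app; auto.
Qed.

Lemma NA : ~ exists w, AB R' A [y] w /\ avoid w S.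
Proof.
  intros [w [Hw Aw]]. destruct H5 as [t [Ht At]].
  destruct (AB_tail_walk _ _ _ _ Hw) as [h [b [E Hb]]]. destruct Hb as [<-|[]].
  apply H2. exists (h ++ y :: t). split.
  - apply AB_join with [y] [y]; [rewrite <- E|]; auto.
  - apply avoid_app; [|auto]. intros a Ha; apply Aw. rewrite E. apply in_or_app; auto.
Qed.

Lemma NB : ~ exists w, AB R' [x] B w /\ avoid w S.
Proof.
  intros [w [Hw Aw]]. destruct H4 as [w4 [Hw4 Aw4]].
  destruct Hw as [Ww [[a [t [E Ha]]] Hl]]. destruct Ha as [<-|[]]. subst w.
  destruct (AB_tail_walk _ _ _ _ Hw4) as [h [b [E4 Hb]]]. destruct Hb as [<-|[]].
  apply H2. exists (h ++ x :: t). split.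
  - apply AB_join with [x] [x]; [rewrite <- E4; auto|]. split; auto. split; eauto. simpl; eauto.
  - apply avoid_app; [|auto]. intros c Hc; apply Aw4. rewrite E4. apply in_or_app; auto.
Qed.

Lemma xS : ~ In x S.
Proof.
  destruct H4 as [w [Hw Aw]]. destruct (AB_tail_walk _ _ _ _ Hw) as [h [b [E Hb]]].
  destruct Hb as [<-|[]]. apply Aw. rewrite E. apply in_or_app; simpl; auto.
Qed.

Lemma yS : ~ In y S.
Proof. destruct H5 as [t [_ At]]. apply At; simpl; auto. Qed.

Lemma hitsx w : AB R A B w -> avoid w S -> In x w /\ In y w.
Proof.
  intros Hw Aw.
  assert (NW : ~ wk R' w) by (intro W; apply H2; exists w; split; auto; eapply AB_wk; eauto).
  destruct (first_bad R R' w (proj1 Hw) NW) as [p [u [v [q [E [W' [Ruv NR]]]]]]].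
  assert (In u w /\ In v w) as [Hu Hv] by (rewrite E; split; apply in_or_app; simpl; auto).
  destruct (badR _ _ Ruv NR) as [[-> ->]|[-> ->]]; auto.
Qed.

Lemma keq : k = length S + 1.
Proof.
  assert (~ length (x :: S) < k).
  { intro L. destruct (H1 _ L) as [w [Hw Aw]].
    assert (avoid w S) by (intros v Hv HvS; apply (Aw v Hv); simpl; auto).
    destruct (hitsx w Hw H) as [Hx _]. apply (Aw x Hx). simpl; auto. }
  simpl in H. lia.
Qed.

Lemma hitsZ w : AB R A B w -> exists v, In v w /\ In v (x :: S).
Proof.
  intros Hw. destruct (dP (exists v, In v w /\ In v S)) as [[v [H H']]|N].
  - exists v; simpl; auto.
  - assert (avoid w S) by (intros v Hv HvS; apply N; eauto).
    destruct (hitsx w Hw H) as [Hx _]. exists x; simpl; auto.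
Qed.

Lemma hitsZ' w : AB R A B w -> exists v, In v w /\ In v (y :: S).
Proof.
  intros Hw. destruct (dP (exists v, In v w /\ In v S)) as [[v [H H']]|N].
  - exists v; simpl; auto.
  - assert (avoid w S) by (intros v Hv HvS; apply N; eauto).
    destruct (hitsx w Hw H) as [_ Hy]. exists y; simpl; auto.
Qed.

Lemma Claim1 : forall T, length T < k -> exists w, AB R' A (x :: S) w /\ avoid w T.
Proof.
  intros T L. destruct (H1 T L) as [W [HW AW]].
  destruct (first_hit (x :: S) W (hitsZ W HW)) as [p [z [q [E [Hz Ap]]]]].
  assert (HP : AB R A (x :: S) (p ++ [z])) by (apply AB_prefix with B q; [rewrite <- E|]; auto).
  assert (AP : avoid (p ++ [z]) T).
  { apply avoid_incl with W; auto. rewrite E. intros a Ha.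
    apply in_app_or in Ha as [|[<-|[]]]; apply in_or_app; simpl; auto. }
  destruct (dP (wk R' (p ++ [z]))) as [Wp|Wp].
  - exists (p ++ [z]); split; auto. eapply AB_wk; eauto.
  - exfalso. destruct (first_bad R R' _ (proj1 HP) Wp) as [p2 [u [v [q2 [E2 [W2 [Ruv NR]]]]]]].
    assert (I := incl_before _ _ _ _ _ _ E2).
    assert (Hu : In u p) by (apply I; apply in_or_app; simpl; auto).
    assert (u <> x) by (intros ->; apply (Ap x Hu); simpl; auto).
    assert (u = y) by (destruct (badR _ _ Ruv NR) as [[? ?]|[? ?]]; auto; contradiction).
    subst u. apply NA. exists (p2 ++ [y]). split.
    + apply AB_wk with R; auto. apply AB_prefix with (x :: S) (v :: q2); [rewrite <- E2|]; simpl; auto.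
    + intros a Ha HaS. apply (Ap a (I a Ha)). simpl; auto.
Qed.

Lemma Claim2 : forall T, length T < k -> exists w, AB R' (y :: S) B w /\ avoid w T.
Proof.
  intros T L. destruct (H1 T L) as [W [HW AW]].
  destruct (last_hit (y :: S) W (hitsZ' W HW)) as [p [z [q [E [Hz Aq]]]]].
  assert (HQ : AB R (y :: S) B (z :: q)) by (apply AB_suffix with A p; [rewrite <- E|]; auto).
  assert (AQ : avoid (z :: q) T).
  { apply avoid_incl with W; auto. rewrite E. intros a Ha. apply in_or_app; simpl; auto. }
  destruct (dP (wk R' (z :: q))) as [Wq|Wq].
  - exists (z :: q); split; auto. eapply AB_wk; eauto.
  - exfalso. destruct (last_bad R R' _ (proj1 HQ) Wq) as [p2 [u [v [q2 [E2 [W2 [Ruv NR]]]]]]].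
    assert (I := incl_after _ _ _ _ _ _ E2).
    assert (Hv : In v q) by (apply I; simpl; auto).
    assert (v <> y) by (intros ->; apply (Aq y Hv); simpl; auto).
    assert (v = x) by (destruct (badR _ _ Ruv NR) as [[? ?]|[? ?]]; auto; contradiction).
    subst v. apply NB. exists (x :: q2). split.
    + apply AB_wk with R; auto. apply AB_suffix with (y :: S) (p2 ++ [u]).
      * rewrite <- app_assoc. simpl. rewrite <- E2. auto.
      * simpl; auto.
    + intros a Ha HaS. apply (Aq a (I a Ha)). simpl; auto.
Qed.

Lemma core : exists F, length F = k /\ fam R A B F.
Proof.
  destruct (IH' k A (x :: S) Claim1) as [F1 [L1 HF1]].
  destruct (IH' k (y :: S) B Claim2) as [F2 [L2 HF2]].
  assert (Ht1 : exists f1 : list V -> list V, forall w, In w F1 -> exists p z q,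
     w = p ++ z :: q /\ f1 w = p ++ [z] /\ In z (x :: S) /\ avoid p (x :: S)).
  { apply (choice_fun (fun w w' => In w F1 -> exists p z q,
      w = p ++ z :: q /\ w' = p ++ [z] /\ In z (x :: S) /\ avoid p (x :: S))).
    intros w. destruct (dP (In w F1)) as [Hw|Hw]; [|exists w; intro; contradiction].
    destruct HF1 as [_ [_ HA]]. destruct (AB_tail_walk _ _ _ _ (HA w Hw)) as [h [b [E Hb]]].
    destruct (first_hit (x :: S) w) as [p [z [q [E' [Hz Ap]]]]].
    { exists b; split; auto. rewrite E; apply in_or_app; simpl; auto. }
    exists (p ++ [z]). intros _. exists p, z, q. auto. }
  destruct Ht1 as [f1 Hf1].
  assert (Ht2 : exists f2 : list V -> list V, forall w, In w F2 -> exists p z q,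
     w = p ++ z :: q /\ f2 w = z :: q /\ In z (y :: S) /\ avoid q (y :: S)).
  { apply (choice_fun (fun w w' => In w F2 -> exists p z q,
      w = p ++ z :: q /\ w' = z :: q /\ In z (y :: S) /\ avoid q (y :: S))).
    intros w. destruct (dP (In w F2)) as [Hw|Hw]; [|exists w; intro; contradiction].
    destruct HF2 as [_ [_ HA]]. destruct (HA w Hw) as [_ [[a [t [E Ha]]] _]].
    destruct (last_hit (y :: S) w) as [p [z [q [E' [Hz Aq]]]]].
    { exists a; split; auto. rewrite E; simpl; auto. }
    exists (z :: q). intros _. exists p, z, q. auto. }
  destruct Ht2 as [f2 Hf2].
  set (F1' := map f1 F1). set (F2' := map f2 F2).
  assert (HF1' : fam R' A (x :: S) F1').
  { apply fam_map with R' A (x :: S); auto.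
    - intros w Hw. destruct (Hf1 w Hw) as [p [z [q [E [-> [Hz _]]]]]].
      apply AB_prefix with (x :: S) q; auto. rewrite <- E. apply HF1; auto.
    - intros w1 w2 Hw1 Hw2 N v Hv1 Hv2. destruct HF1 as [_ [D _]].
      apply (D w1 w2 Hw1 Hw2 N v).
      + destruct (Hf1 w1 Hw1) as [p [z [q [E [E' _]]]]]. rewrite E' in Hv1. rewrite E.
        apply in_app_or in Hv1 as [|[<-|[]]]; apply in_or_app; simpl; auto.
      + destruct (Hf1 w2 Hw2) as [p [z [q [E [E' _]]]]]. rewrite E' in Hv2. rewrite E.
        apply in_app_or in Hv2 as [|[<-|[]]]; apply in_or_app; simpl; auto. }
  assert (HF2' : fam R' (y :: S) B F2').
  { apply fam_map with R' (y :: S) B; auto.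
    - intros w Hw. destruct (Hf2 w Hw) as [p [z [q [E [-> [Hz _]]]]]].
      apply AB_suffix with (y :: S) p; auto. rewrite <- E. apply HF2; auto.
    - intros w1 w2 Hw1 Hw2 N v Hv1 Hv2. destruct HF2 as [_ [D _]].
      apply (D w1 w2 Hw1 Hw2 N v).
      + destruct (Hf2 w1 Hw1) as [p [z [q [E [E' _]]]]]. rewrite E' in Hv1. rewrite E.
        apply in_or_app; simpl; auto.
      + destruct (Hf2 w2 Hw2) as [p [z [q [E [E' _]]]]]. rewrite E' in Hv2. rewrite E.
        apply in_or_app; simpl; auto. }
  assert (C1 : forall w, In w F1' -> exists p z, w = p ++ [z] /\ In z (x :: S) /\ avoid p (x :: S)).
  { intros w Hw. apply in_map_iff in Hw as [w0 [<- Hw0]].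
    destruct (Hf1 w0 Hw0) as [p [z [q [_ [E [Hz Ap]]]]]]. eauto. }
  assert (C2 : forall Q, In Q F2' -> exists z q, Q = z :: q /\ In z (y :: S) /\ avoid q (y :: S)).
  { intros Q HQ. apply in_map_iff in HQ as [w0 [<- Hw0]].
    destruct (Hf2 w0 Hw0) as [p [z [q [_ [E [Hz Aq]]]]]]. eauto. }
  assert (Cov : forall s, In s (y :: S) -> exists Q t, In Q F2' /\ Q = s :: t).
  { apply fam_cover with R' B; auto.
    - constructor; auto. apply yS.
    - unfold F2'. rewrite length_map, L2, keq. simpl. lia. }
  assert (K1 : forall w Q, In w F1' -> In Q F2' -> forall z' q, Q = z' :: q ->
             forall v, In v w -> In v q -> False).
  { intros w Q Hw HQ z' q EQ v Hv Hq.
    destruct (C1 w Hw) as [p [z [Ew [Hz Ap]]]].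
    destruct (C2 Q HQ) as [z'' [q' [EQ' [_ Aq]]]]. rewrite EQ in EQ'. inversion EQ'; subst z'' q'.
    destruct (in_split _ _ Hq) as [qa [qb Eq]].
    assert (HV : AB R' [v] B (v :: qb)).
    { apply AB_suffix with (y :: S) (z' :: qa); [|simpl; auto]. simpl.
      rewrite <- Eq, <- EQ. apply HF2'; auto. }
    assert (AV : avoid (v :: qb) S).
    { intros a Ha HaS. apply (Aq a); [rewrite Eq; apply in_or_app; simpl; auto|simpl; auto]. }
    rewrite Ew in Hv. apply in_app_or in Hv as [Hv|[Hv|[]]].
    - destruct (in_split _ _ Hv) as [pa [pb Ep]].
      apply H2. exists (pa ++ v :: qb). split.
      + apply AB_join with [v] [v]; auto. apply AB_prefix with (x :: S) (pb ++ [z]); simpl; auto.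
        rewrite app_comm_cons, app_assoc, <- Ep, <- Ew. apply HF1'; auto.
      + apply avoid_app; auto. intros a Ha HaS.
        apply (Ap a); [rewrite Ep; apply in_or_app; auto|simpl; auto].
    - subst v. assert (z = x).
      { destruct Hz as [|Hz]; auto. exfalso. apply (Aq z Hq). simpl; auto. }
      subst z. apply NB. eauto. }
  assert (K2 : forall w, In w F1' -> ~ In y w).
  { intros w Hw Hy. destruct (C1 w Hw) as [p [z [Ew [Hz Ap]]]].
    rewrite Ew in Hy. apply in_app_or in Hy as [Hy|[Hy|[]]].
    - destruct (in_split _ _ Hy) as [pa [pb Ep]]. apply NA. exists (pa ++ [y]). split.
      + apply AB_prefix with (x :: S) (pb ++ [z]); simpl; auto.
        rewrite app_comm_cons, app_assoc, <- Ep, <- Ew. apply HF1'; auto.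
      + intros a Ha HaS. apply (Ap a); [|simpl; auto]. rewrite Ep.
        apply in_app_or in Ha as [|[<-|[]]]; apply in_or_app; simpl; auto.
    - subst z. destruct Hz as [E|E]; [apply hxy; auto|apply yS; auto]. }
  set (s' := fun z => if deq z x then y else z).
  assert (Hg : exists g : list V -> list V, forall w, In w F1' -> exists p z Q q,
     w = p ++ [z] /\ In Q F2' /\ Q = s' z :: q /\
     g w = (if deq z x then w ++ Q else p ++ Q)).
  { apply (choice_fun (fun w g => In w F1' -> exists p z Q q,
     w = p ++ [z] /\ In Q F2' /\ Q = s' z :: q /\
     g = (if deq z x then w ++ Q else p ++ Q))).
    intros w. destruct (dP (In w F1')) as [Hw|Hw]; [|exists w; intro; contradiction].
    destruct (C1 w Hw) as [p [z [Ew [Hz Ap]]]].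
    destruct (Cov (s' z)) as [Q [t [HQ EQ]]].
    { unfold s'. destruct (deq z x); simpl; auto. destruct Hz; [congruence|auto]. }
    exists (if deq z x then w ++ Q else p ++ Q). intros _. exists p, z, Q, t. auto. }
  destruct Hg as [g Hg].
  exists (map g F1'). split.
  { rewrite length_map. unfold F1'. rewrite length_map. auto. }
  assert (Hin : forall w, In w F1' -> forall v, In v (g w) ->
     exists p z Q q, w = p ++ [z] /\ In Q F2' /\ Q = s' z :: q /\
       (In v w \/ In v q \/ (z = x /\ v = y))).
  { intros w Hw v Hv. destruct (Hg w Hw) as [p [z [Q [q [Ew [HQ [EQ Eg]]]]]]].
    exists p, z, Q, q. split; auto. split; auto. split; auto.
    rewrite Eg in Hv. unfold s' in EQ. destruct (deq z x) as [->|N].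
    - apply in_app_or in Hv as [|Hv]; auto. rewrite EQ in Hv. destruct Hv as [<-|]; auto.
    - rewrite EQ in Hv. apply in_app_or in Hv as [Hv|[<-|Hv]]; auto.
      + left. rewrite Ew. apply in_or_app; auto.
      + left. rewrite Ew. apply in_or_app; simpl; auto. }
  apply fam_map with R' A (x :: S); auto.
  - intros w Hw. destruct (Hg w Hw) as [p [z [Q [q [Ew [HQ [EQ Eg]]]]]]].
    rewrite Eg. assert (HAQ : AB R (y :: S) B Q) by (apply AB_up; apply HF2'; auto).
    assert (HAw : AB R A (x :: S) w) by (apply AB_up; apply HF1'; auto).
    unfold s' in EQ. destruct (deq z x) as [->|N].
    + rewrite Ew, <- app_assoc. simpl. rewrite EQ.
      apply AB_join with (x :: S) [x]; [rewrite <- Ew; auto|].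
      rewrite EQ in HAQ. destruct HAQ as [WQ [_ [h [b [Eb Hb]]]]].
      split; [constructor; auto; apply hR; auto|]. split.
      * exists x, (y :: q); simpl; auto.
      * exists (x :: h), b. rewrite Eb. auto.
    + rewrite EQ. apply AB_join with (x :: S) (y :: S); [rewrite <- Ew; auto|].
      rewrite <- EQ; auto.
  - intros w1 w2 Hw1 Hw2 N v Hv1 Hv2.
    destruct (Hin w1 Hw1 v Hv1) as [p1 [z1 [Q1 [q1 [E1 [HQ1 [EQ1 O1]]]]]]].
    destruct (Hin w2 Hw2 v Hv2) as [p2 [z2 [Q2 [q2 [E2 [HQ2 [EQ2 O2]]]]]]].
    assert (N' : w1 <> w2) by (intros ->; auto).
    destruct HF1' as [_ [D1 _]]. destruct HF2' as [_ [D2 _]].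
    assert (Dw := D1 w1 w2 Hw1 Hw2 N').
    assert (Z12 : z1 <> z2).
    { intros <-. apply (Dw z1); [rewrite E1|rewrite E2]; apply in_or_app; simpl; auto. }
    assert (Hz1 : In z1 (x :: S)) by (destruct (C1 w1 Hw1) as [p [z [E [Hz _]]]];
      rewrite E1 in E; apply app_inj_tail in E as [_ ->]; auto).
    assert (Hz2 : In z2 (x :: S)) by (destruct (C1 w2 Hw2) as [p [z [E [Hz _]]]];
      rewrite E2 in E; apply app_inj_tail in E as [_ ->]; auto).
    assert (NQ : Q1 <> Q2).
    { intros <-. rewrite EQ1 in EQ2. inversion EQ2 as [[Es Eq]]. unfold s' in Es.
      destruct (deq z1 x) as [e1|n1], (deq z2 x) as [e2|n2]; try congruence.
      - destruct Hz2 as [|Hz2]; [congruence|]. apply yS; rewrite Es; auto.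
      - destruct Hz1 as [|Hz1]; [congruence|]. apply yS; rewrite <- Es; auto. }
    assert (DQ := D2 Q1 Q2 HQ1 HQ2 NQ).
    assert (Iq1 : forall a, In a q1 -> In a Q1) by (intros a Ha; rewrite EQ1; simpl; auto).
    assert (Iq2 : forall a, In a q2 -> In a Q2) by (intros a Ha; rewrite EQ2; simpl; auto).
    destruct O1 as [O1|[O1|[Ez1 Ev1]]]; destruct O2 as [O2|[O2|[Ez2 Ev2]]].
    + apply (Dw v); auto.
    + apply (K1 w1 Q2 Hw1 HQ2 _ _ EQ2 v); auto.
    + subst v. apply (K2 w1 Hw1); auto.
    + apply (K1 w2 Q1 Hw2 HQ1 _ _ EQ1 v); auto.
    + apply (DQ v); auto.
    + subst v z2. apply (DQ y); auto. rewrite EQ2. unfold s'. destruct (deq x x); [simpl; auto|congruence].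
    + subst v. apply (K2 w2 Hw2); auto.
    + subst v z1. apply (DQ y); auto. rewrite EQ1. unfold s'. destruct (deq x x); [simpl; auto|congruence].
    + congruence.
Qed.

End Core.

Section MengerE.
Context {V : Type}.
Implicit Types (A B Y Z : list V) (w : list V).

Definition RE (E : list (V * V)) (u v : V) : Prop := In (u, v) E \/ In (v, u) E.

Lemma wk_RE_nil w : wk (RE []) w -> exists a, w = [a].
Proof. intros W. inversion W; subst; eauto. destruct H as [[]|[]]. Qed.

Lemma menger_base k A B :
  (forall Y, length Y < k -> exists w, AB (RE []) A B w /\ avoid w Y) ->
  exists F, length F = k /\ fam (RE []) A B F.
Proof.
  intros H.
  set (C := nodup deq (filter (fun a => if dP (In a B) then true else false) A)).
  assert (HC : forall a, In a C <-> In a A /\ In a B).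
  { intros a. unfold C. rewrite nodup_In, filter_In. destruct (dP (In a B)); split; intros; intuition; try discriminate; contradiction. }
  assert (L : k <= length C).
  { destruct (le_lt_dec k (length C)) as [|L]; auto. exfalso.
    destruct (H C L) as [w [[W [[a [t [E Ha]]] [h [b [E' Hb]]]]] Aw]].
    destruct (wk_RE_nil w W) as [c ->]. assert (a = c) by congruence.
    assert (b = c) by (destruct h as [|? [|]]; simpl in E'; inversion E'; auto).
    subst a b. apply (Aw c); simpl; auto. apply HC; auto. }
  exists (map (fun v => [v]) (firstn k C)). split.
  - rewrite length_map. apply firstn_length_le; auto.
  - assert (Hf : forall a, In a (firstn k C) -> In a C).
    { intros a Ha. rewrite <- (firstn_skipn k C). apply in_or_app; auto. }
    assert (ND : NoDup (firstn k C)).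
    { apply NoDup_app_remove_r with (skipn k C). rewrite firstn_skipn. apply NoDup_nodup. }
    split; [|split].
    + apply NoDup_map_on; auto. intros a b _ _ E; inversion E; auto.
    + intros w1 w2 H1 H2 N v Hv1 Hv2.
      apply in_map_iff in H1 as [a [<- _]]. apply in_map_iff in H2 as [b [<- _]].
      destruct Hv1 as [<-|[]]; destruct Hv2 as [<-|[]]. auto.
    + intros w Hw. apply in_map_iff in Hw as [a [<- Ha]].
      apply Hf, HC in Ha as [HA HB]. split; [constructor|split].
      * exists a, []; auto.
      * exists [], a; auto.
Qed.

Theorem mengerE n : forall E, length E <= n -> (forall p, In p E -> fst p <> snd p) ->
  forall k A B, (forall Y, length Y < k -> exists w, AB (RE E) A B w /\ avoid w Y) ->
  exists F, length F = k /\ fam (RE E) A B F.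
Proof.
  induction n as [|n IHn]; intros E LE HE k A B H.
  - destruct E; [|simpl in LE; lia]. apply menger_base; auto.
  - destruct E as [|[x y] E0]; [apply menger_base; auto|].
    set (E := (x, y) :: E0) in *.
    set (E' := filter (fun p => if dP (p = (x, y) \/ p = (y, x)) then false else true) E).
    assert (InE' : forall p, In p E' <-> In p E /\ ~ (p = (x, y) \/ p = (y, x))).
    { intros p. unfold E'. rewrite filter_In. destruct (dP _); split; intuition; discriminate. }
    assert (LE' : length E' <= n).
    { unfold E', E. simpl. destruct (dP _) as [_|N]; [|exfalso; apply N; auto].
      pose proof (filter_length_le (fun p => if dP (p = (x, y) \/ p = (y, x)) then false else true) E0).
      simpl in LE. lia. }
    assert (HE' : forall p, In p E' -> fst p <> snd p) by (intros p Hp; apply HE, InE', Hp).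
    assert (hxy : x <> y) by (apply (HE (x, y)); simpl; auto).
    assert (IH' := fun k A B => IHn E' LE' HE' k A B).
    assert (hR : forall u v, RE E u v <-> RE E' u v \/ (u = x /\ v = y) \/ (u = y /\ v = x)).
    { intros u v. unfold RE. rewrite !InE'. split.
      - intros Huv. destruct (dP ((u = x /\ v = y) \/ (u = y /\ v = x))) as [|N]; auto.
        left. destruct Huv; [left|right]; split; auto; intros [Q|Q]; inversion Q; subst; apply N; auto.
      - intros [[[? _]|[? _]]|[[-> ->]|[-> ->]]]; auto; unfold E; simpl; auto. }
    destruct (dP (forall Y, length Y < k -> exists w, AB (RE E') A B w /\ avoid w Y)) as [Hy|Hn].
    + destruct (IH' k A B Hy) as [F [L HF]]. exists F; split; auto.
      apply fam_mono with (RE E'); auto. intros u v; rewrite hR; auto.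
    + apply not_all_ex_not in Hn as [Y0 HY0].
      apply imply_to_and in HY0 as [LY0 NY0].
      set (S := nodup deq Y0).
      assert (HS : NoDup S) by apply NoDup_nodup.
      assert (LS : length S < k).
      { enough (length S <= length Y0) by lia. apply NoDup_incl_length; auto.
        intros a; unfold S; rewrite nodup_In; auto. }
      assert (AS : forall w, avoid w S <-> avoid w Y0).
      { intros w; unfold avoid, S; split; intros Hw v Hv HY; apply (Hw v Hv);
        [apply nodup_In; auto|apply nodup_In in HY; auto]. }
      assert (N2 : ~ exists w, AB (RE E') A B w /\ avoid w S).
      { intros [w [Hw Aw]]. apply NY0. exists w. split; auto. apply AS; auto. }
      destruct (H S LS) as [W [HW AW]].
      assert (NW : ~ wk (RE E') W) by (intro Ww; apply N2; exists W; split; auto; split; auto; apply HW).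
      destruct (first_bad _ _ W (proj1 HW) NW) as [p [u [v [q [EW [W' [Ruv NR]]]]]]].
      assert (HA : AB (RE E') A [u] (p ++ [u])).
      { split; auto. destruct (AB_prefix (RE E) A B [u] p u (v :: q)) as [_ X]; [rewrite <- EW; auto|simpl; auto|auto]. }
      assert (AA : avoid (p ++ [u]) S).
      { apply avoid_incl with W; auto. rewrite EW. intros c Hc.
        apply in_app_or in Hc as [|[<-|[]]]; apply in_or_app; simpl; auto. }
      apply hR in Ruv as [Ruv|[[-> ->]|[-> ->]]]; [contradiction| |].
      * apply (core (RE E) (RE E') x y hR hxy IH' k A B S H N2 LS HS). eauto.
      * apply (core (RE E) (RE E') y x) with S; auto.
        { intros a b. rewrite hR. tauto. }
        eauto.
Qed.

End MengerE.

Section MengerG.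
Context {V : Type}.
Implicit Types (A B Y Z : list V) (w : list V).

Fixpoint edges (w : list V) : list (V * V) :=
  match w with
  | u :: ((v :: _) as t) => (u, v) :: edges t
  | _ => []
  end.

Definition verts (E : list (V * V)) : list V := flat_map (fun p => [fst p; snd p]) E.

Fixpoint subs (l : list V) : list (list V) :=
  match l with [] => [[]] | a :: l' => subs l' ++ map (cons a) (subs l') end.

Lemma filter_subs (f : V -> bool) l : In (filter f l) (subs l).
Proof.
  induction l as [|a l IH]; simpl; auto.
  apply in_or_app. destruct (f a); [right; apply in_map; auto|left; auto].
Qed.

Lemma wk_edges (R : V -> V -> Prop) w : wk R w ->
  wk (RE (edges w)) w /\ forall p, In p (edges w) -> R (fst p) (snd p).
Proof.
  induction 1 as [v|u v l Ruv W [IH1 IH2]]; simpl.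
  - split; [constructor|intros _ []].
  - split.
    + constructor; [left; simpl; auto|]. eapply wk_mono; [|exact IH1].
      intros a b [H|H]; [left|right]; simpl; auto.
    + intros p [<-|Hp]; auto.
Qed.

Lemma wk_verts E a t : wk (RE E) (a :: t) -> forall v, In v t -> In v (verts E).
Proof.
  revert a. induction t as [|b t IH]; intros a W v Hv; [destruct Hv|].
  inversion W; subst. destruct Hv as [<-|Hv]; [|eapply IH; eauto].
  unfold verts. apply in_flat_map. destruct H1 as [H|H]; eexists; split; eauto; simpl; auto.
Qed.

Variable adj : V -> V -> Prop.
Hypothesis adj_sym : forall u v, adj u v -> adj v u.
Hypothesis adj_irr : forall v, ~ adj v v.

Lemma fin_red k : forall A B, (forall Y, length Y < k -> exists w, AB adj A B w /\ avoid w Y) ->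
  exists E, (forall p, In p E -> adj (fst p) (snd p)) /\
    forall Y, length Y < k -> exists w, AB (RE E) A B w /\ avoid w Y.
Proof.
  induction k as [|k IH]; intros A B H.
  - exists []. split; [intros _ []|intros Y L; lia].
  - destruct (IH A B) as [E0 [HE0 H0]]; [intros Y L; apply H; lia|].
    set (U := nodup deq (A ++ verts E0)).
    destruct (choice_fun (fun Z w => (wk adj w \/ w = []) /\
       ((exists w', AB adj A B w' /\ avoid w' Z) -> AB adj A B w /\ avoid w Z))) as [ch Hch].
    { intros Z. destruct (dP (exists w', AB adj A B w' /\ avoid w' Z)) as [[w' Hw']|N].
      - exists w'. split; auto. left; apply Hw'.
      - exists []. split; auto. intro; contradiction. }
    set (E1 := E0 ++ flat_map (fun Z => edges (ch Z)) (subs U)).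
    assert (Sub : forall u v, RE E0 u v -> RE E1 u v).
    { intros u v [Q|Q]; [left|right]; unfold E1; apply in_or_app; auto. }
    exists E1. split.
    { intros p Hp. unfold E1 in Hp. apply in_app_or in Hp as [Hp|Hp]; auto.
      apply in_flat_map in Hp as [Z [_ Hp]]. destruct (Hch Z) as [[W|W] _].
      - apply (wk_edges _ _ W); auto.
      - rewrite W in Hp. destruct Hp. }
    intros Y L.
    assert (InU : forall w, AB (RE E0) A B w -> forall v, In v w -> In v U).
    { intros w [W [[a [t [E Ha]]] _]] v Hv. unfold U. apply nodup_In. subst w.
      destruct Hv as [<-|Hv]; apply in_or_app; [left; auto|right]. eapply wk_verts; eauto. }
    destruct (dP (exists y, In y Y /\ ~ In y U)) as [[y [Hy NU]]|Nex].
    + set (Y2 := filter (fun u => if dP (In u Y) then true else false) U).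
      assert (L2 : length Y2 < k).
      { assert (length Y2 <= length (remove deq y Y)).
        { apply NoDup_incl_length. apply NoDup_filter, NoDup_nodup.
          intros u Hu. unfold Y2 in Hu. apply filter_In in Hu as [Hu1 Hu2].
          destruct (dP (In u Y)); [|discriminate]. apply in_in_remove; auto.
          intros ->; contradiction. }
        pose proof (remove_length_lt deq Y y Hy). simpl in L. lia. }
      destruct (H0 Y2 L2) as [w [Hw Aw]]. exists w. split.
      * destruct Hw as [W X]. split; auto. eapply wk_mono; [apply Sub|auto].
      * intros v Hv HvY. apply (Aw v Hv). unfold Y2. apply filter_In. split.
        -- eapply InU; eauto.
        -- destruct (dP (In v Y)); auto.
    + set (Z := filter (fun u => if dP (In u Y) then true else false) U).
      assert (LZ : length Z < S k).
      { enough (length Z <= length Y) by lia. apply NoDup_incl_length.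
        apply NoDup_filter, NoDup_nodup.
        intros u Hu. unfold Z in Hu. apply filter_In in Hu as [_ Hu].
        destruct (dP (In u Y)); [auto|discriminate]. }
      destruct (Hch Z) as [_ HZ]. destruct HZ as [HZ1 HZ2]; [apply H; auto|].
      exists (ch Z). split.
      * destruct HZ1 as [W X]. split; auto.
        destruct (wk_edges _ _ W) as [W' _]. eapply wk_mono; [|exact W'].
        intros u v [Q|Q]; [left|right]; unfold E1; apply in_or_app; right;
          apply in_flat_map; exists Z; split; auto; apply filter_subs.
      * intros v Hv HvY. apply (HZ2 v Hv). unfold Z. apply filter_In. split.
        -- destruct (dP (In v U)) as [|NV]; auto. exfalso; apply Nex; eauto.
        -- destruct (dP (In v Y)); auto.
Qed.

Theorem mengerG k A B : (forall Y, length Y < k -> exists w, AB adj A B w /\ avoid w Y) ->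
  exists F, length F = k /\ fam adj A B F.
Proof.
  intros H. destruct (fin_red k A B H) as [E [HE H']].
  destruct (mengerE (length E) E (le_n _)) with k A B as [F [L HF]]; auto.
  - intros p Hp Eq. apply (adj_irr (fst p)). rewrite Eq at 2. apply HE; auto.
  - exists F. split; auto. apply fam_mono with (RE E); auto.
    intros u v [Q|Q]; [apply (HE _ Q)|apply adj_sym, (HE _ Q)].
Qed.

End MengerG.

Lemma nat_min (P : nat -> Prop) : (exists n, P n) -> exists n, P n /\ forall m, P m -> n <= m.
Proof.
  intros [n Hn]. apply NNPP. intros N.
  assert (forall k, forall m, m <= k -> ~ P m).
  { induction k as [|k IH]; intros m Hm Pm.
    - apply N. exists m. split; auto. intros; lia.
    - destruct (le_lt_dec m k) as [|L]; [apply (IH m); auto|].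
      apply N. exists m. split; auto. intros j Pj. destruct (le_lt_dec m j); auto.
      exfalso. apply (IH j); auto. lia. }
  apply (H n n); auto.
Qed.

Section Walks.
Context {V : Type}.
Variable adj : V -> V -> Prop.
Hypothesis adj_sym : forall u v, adj u v -> adj v u.

Lemma ca_notin S u v : conn_avoid adj S u v -> ~ In u S /\ ~ In v S.
Proof. induction 1; intuition. Qed.

Lemma ca_trans S u v w : conn_avoid adj S u v -> conn_avoid adj S v w -> conn_avoid adj S u w.
Proof. induction 1; intros; auto. econstructor; eauto. Qed.

Lemma ca_sym S u v : conn_avoid adj S u v -> conn_avoid adj S v u.
Proof.
  induction 1 as [v Hv|u v w Hu Huv H IH]; [constructor; auto|].
  apply ca_trans with v; auto. econstructor; eauto.
  - apply (ca_notin _ _ _ H).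
  - constructor; auto.
Qed.

Lemma ca_mono X S u w : conn_avoid adj X u w ->
  (forall v, conn_avoid adj X v w -> ~ In v S) -> conn_avoid adj S u w.
Proof.
  induction 1 as [v Hv|u v w Hu Huv H IH]; intros HS.
  - constructor. apply HS. constructor; auto.
  - econstructor; eauto. apply HS. econstructor; eauto.
Qed.

Lemma ca_eqv X X' u w : (forall a, In a X <-> In a X') -> conn_avoid adj X u w -> conn_avoid adj X' u w.
Proof.
  intros E. induction 1; [constructor|econstructor]; eauto; rewrite <- E; auto.
Qed.

Lemma ray_seg (r : nat -> V) Sx : (forall n, adj (r n) (r (S n))) ->
  forall d n, (forall j, n <= j <= n + d -> ~ In (r j) Sx) -> conn_avoid adj Sx (r n) (r (n + d)).
Proof.
  intros Hr. induction d as [|d IH]; intros n H.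
  - rewrite Nat.add_0_r. constructor. apply H; lia.
  - apply ca_trans with (r (S n)).
    + econstructor; [apply H; lia|apply Hr|constructor; apply H; lia].
    + replace (n + S d) with (S n + d) by lia. apply IH. intros j Hj; apply H; lia.
Qed.

Lemma ray_beyond (r : nat -> V) (Sx : list V) : (forall n m, r n = r m -> n = m) ->
  exists M, forall j, M <= j -> ~ In (r j) Sx.
Proof.
  intros Hinj. induction Sx as [|a Sx [M HM]].
  - exists 0. intros _ _ [].
  - destruct (dP (exists j, r j = a)) as [[j Hj]|N].
    + exists (max M (S j)). intros i Hi [E|E].
      * rewrite <- Hj in E. apply Hinj in E. lia.
      * apply (HM i); auto; lia.
    + exists M. intros i Hi [E|E]; [apply N; eauto|apply (HM i); auto].
Qed.

Lemma ca_walk S u v : conn_avoid adj S u v ->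
  exists h t, wk adj (u :: t) /\ u :: t = h ++ [v] /\ avoid (u :: t) S.
Proof.
  induction 1 as [v Hv|u v w Hu Huv H [h [t [W [E A]]]]].
  - exists [], []. split; [constructor|split; auto]. intros a [<-|[]]; auto.
  - exists (u :: h), (v :: t). split; [constructor; auto|]. split.
    + rewrite E; auto.
    + intros a [<-|Ha]; auto.
Qed.

Lemma shrink A B w : AB adj A B w -> exists p, incl p w /\ NoDup p /\ wk adj p /\
  (exists a t, p = a :: t /\ In a A /\ avoid t A) /\
  (exists h b, p = h ++ [b] /\ In b B /\ avoid h B).
Proof.
  intros Hw.
  destruct (nat_min (fun n => exists p, length p = n /\ incl p w /\ AB adj A B p)) as [n [[p [Lp [Ip Hp]]] Hmin]].
  { exists (length w). exists w. split; auto. split; auto. apply incl_refl. }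
  assert (Short : forall p', incl p' p -> AB adj A B p' -> length p <= length p').
  { intros p' I H. rewrite Lp. apply Hmin. exists p'. split; auto. split; auto.
    eapply incl_tran; eauto. }
  exists p. split; auto.
  assert (ND : NoDup p).
  { apply NNPP. intros N. apply not_NoDup in N as [a [l1 [l2 [l3 E]]]];
      [|intros x y; apply classic].
    assert (Hp' : AB adj A B (l1 ++ a :: l3)).
    { destruct Hp as [W [[a0 [t0 [E0 Ha0]]] [h0 [b0 [E1 Hb0]]]]]. split; [|split].
      - apply wk_app.
        + apply wk_splitl with (l2 ++ a :: l3). rewrite <- E. auto.
        + apply wk_splitr with (l1 ++ a :: l2). rewrite <- app_assoc. simpl. rewrite <- E. auto.
      - destruct l1 as [|c l1]; simpl in *.
        + rewrite E in E0. inversion E0; subst. eauto.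
        + rewrite E in E0. inversion E0; subst. eauto.
      - destruct (last_of_suffix p h0 (l1 ++ a :: l2) (a :: l3) b0 E1) as [h' E'].
        + rewrite E, <- app_assoc. auto.
        + discriminate.
        + exists (l1 ++ h'). rewrite E', app_assoc. eauto. }
    assert (I : incl (l1 ++ a :: l3) p).
    { rewrite E. intros c Hc. apply in_app_or in Hc as [|[<-|Hc]]; apply in_or_app; simpl; auto.
      right. right. apply in_or_app; simpl; auto. }
    pose proof (Short _ I Hp'). rewrite E in H. rewrite !length_app in H. simpl in H. rewrite !length_app in H. simpl in H. lia. }
  split; auto. split; [apply Hp|]. split.
  - destruct Hp as [W [[a [t [E Ha]]] Hl]]. exists a, t. split; auto. split; auto.
    intros v Hv HvA. destruct (in_split _ _ Hv) as [t1 [t2 Et]].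
    assert (Hp' : AB adj A B (v :: t2)).
    { apply AB_suffix with A (a :: t1); auto. simpl. rewrite <- Et, <- E. split; [auto|split; [exists a, t; auto|auto]]. }
    assert (I : incl (v :: t2) p).
    { rewrite E, Et. intros c Hc. right. apply in_or_app; simpl; auto. }
    pose proof (Short _ I Hp'). rewrite E, Et in H. simpl in H. rewrite length_app in H. simpl in H. lia.
  - destruct Hp as [W [Hh [h [b [E Hb]]]]]. exists h, b. split; auto. split; auto.
    intros v Hv HvB. destruct (in_split _ _ Hv) as [h1 [h2 Eh]].
    assert (Hp' : AB adj A B (h1 ++ [v])).
    { apply AB_prefix with B (h2 ++ [b]); auto. rewrite app_comm_cons, app_assoc, <- Eh, <- E.
      split; [auto|split; [exact Hh|eauto]]. }
    assert (I : incl (h1 ++ [v]) p).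
    { rewrite E, Eh. intros c Hc. apply in_app_or in Hc as [|[<-|[]]]; apply in_or_app; left;
      apply in_or_app; simpl; auto. }
    pose proof (Short _ I Hp'). rewrite E, Eh in H. rewrite !length_app in H. simpl in H. rewrite ?length_app in H. simpl in H. lia.
Qed.

End Walks.

Section Ends.
Context {V : Type}.
Variable adj : V -> V -> Prop.
Hypothesis adj_sym : forall u v, adj u v -> adj v u.
Hypothesis adj_irr : forall v, ~ adj v v.
Variable nb : V -> list V.
Hypothesis hnb : forall v w, adj v w -> In w (nb v).
Variable r0 : nat -> V.
Hypothesis r0inj : forall n m, r0 n = r0 m -> n = m.
Hypothesis r0adj : forall n, adj (r0 n) (r0 (S n)).

Definition sepa (X : list V) v :=
  exists m, (forall j, m <= j -> ~ In (r0 j) X) /\ conn_avoid adj X v (r0 m).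
Definition separates (X W : list V) := forall w, In w W -> ~ sepa X w.

Lemma sepa_all X v : sepa X v -> exists m, (forall j, m <= j -> ~ In (r0 j) X) /\
  forall m', m <= m' -> conn_avoid adj X v (r0 m').
Proof.
  intros [m [Hm H]]. exists m. split; auto. intros m' Hm'.
  replace m' with (m + (m' - m)) by lia. apply ca_trans with (r0 m); auto.
  apply ray_seg; auto. intros j Hj; apply Hm; lia.
Qed.

Lemma sepa_large X v N : sepa X v -> exists m, N <= m /\ (forall j, m <= j -> ~ In (r0 j) X) /\
  conn_avoid adj X v (r0 m).
Proof.
  intros H. destruct (sepa_all X v H) as [m [Hm H']]. exists (max m N).
  split; [lia|]. split; [intros j Hj; apply Hm; lia|apply H'; lia].
Qed.

Lemma sepa_r0 X m : (forall j, m <= j -> ~ In (r0 j) X) -> sepa X (r0 m).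
Proof. intros H. exists m. split; auto. constructor. apply H; auto. Qed.

Lemma sepa_notin X v : sepa X v -> ~ In v X.
Proof. intros [m [_ H]]. apply (ca_notin adj _ _ _ H). Qed.

Lemma sepa_path X u v : conn_avoid adj X u v -> sepa X v -> sepa X u.
Proof. intros H [m [Hm H']]. exists m. split; auto. eapply ca_trans; eauto. Qed.

Lemma sepa_step X u v : ~ In u X -> adj u v -> sepa X v -> sepa X u.
Proof.
  intros Hu Huv Hv. apply sepa_path with v; auto. econstructor; eauto.
  constructor. apply sepa_notin; auto.
Qed.

Lemma sepa_conn X u v : sepa X u -> sepa X v -> conn_avoid adj X u v.
Proof.
  intros Hu Hv. destruct (sepa_all X u Hu) as [m1 [_ H1]]. destruct (sepa_all X v Hv) as [m2 [_ H2]].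
  apply ca_trans with (r0 (max m1 m2)); [apply H1; lia|]. apply ca_sym; auto. apply H2; lia.
Qed.

Lemma sepa_transfer X Sx u v : sepa X u -> sepa X v -> (forall s, In s Sx -> ~ sepa X s) ->
  conn_avoid adj Sx u v.
Proof.
  intros Hu Hv HS. apply ca_mono with X; [apply sepa_conn; auto|].
  intros z Hz HzS. apply (HS z HzS). apply sepa_path with v; auto.
Qed.

Lemma sepa_eqv X X' v : (forall a, In a X <-> In a X') -> sepa X v -> sepa X' v.
Proof.
  intros E [m [Hm H]]. exists m. split; [intros j Hj Hin; apply (Hm j Hj); apply E; auto|].
  eapply ca_eqv; eauto.
Qed.

Lemma hit Y X u t : conn_avoid adj Y u t -> conn_avoid adj X u t \/
  exists x, In x X /\ conn_avoid adj Y u x /\ conn_avoid adj Y x t.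
Proof.
  induction 1 as [v Hv|u v w Hu Huv H IH].
  - destruct (dP (In v X)) as [Hx|Hx]; [right; exists v; split; auto; split; constructor; auto|].
    left; constructor; auto.
  - destruct IH as [IH|[x [Hx [H1 H2]]]].
    + destruct (dP (In u X)) as [Hx|Hx].
      * right. exists u. split; auto. split; [constructor; auto|econstructor; eauto].
      * left. econstructor; eauto.
    + right. exists x. split; auto. split; auto. econstructor; eauto.
Qed.

Lemma nest X' Z X v : separates X' Z -> incl X Z -> sepa X' v -> sepa X v.
Proof.
  intros HS I Hv.
  destruct (ray_beyond r0 X r0inj) as [M HM].
  destruct (sepa_large X' v M Hv) as [m [Lm [Hm H]]].
  destruct (hit X' X v (r0 m) H) as [H'|[x [Hx [_ H2]]]].
  - exists m. split; auto. intros j Hj; apply HM; lia.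
  - exfalso. apply (HS x (I x Hx)). exists m. split; auto.
Qed.

Lemma minsep_ex W : exists X, separates X W /\ NoDup X /\
  forall Y, separates Y W -> length X <= length Y.
Proof.
  destruct (nat_min (fun n => exists X, separates X W /\ NoDup X /\ length X = n))
    as [n [[X [HX [ND L]]] Hmin]].
  - exists (length (nodup deq W)). exists (nodup deq W). split; [|split; auto; apply NoDup_nodup].
    intros w Hw Hs. apply (sepa_notin _ _ Hs). apply nodup_In; auto.
  - exists X. split; auto. split; auto. intros Y HY. rewrite L.
    transitivity (length (nodup deq Y)).
    + apply Hmin. exists (nodup deq Y). split; [|split; auto; apply NoDup_nodup].
      intros w Hw Hs. apply (HY w Hw). eapply sepa_eqv; [|exact Hs].
      intros a; rewrite nodup_In; tauto.
    + apply NoDup_incl_length; [apply NoDup_nodup|]. intros a; rewrite nodup_In; auto.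
Qed.

Lemma min_adj W X x : separates X W -> (forall Y, separates Y W -> length X <= length Y) ->
  In x X -> exists y, adj x y /\ sepa X y.
Proof.
  intros HS Hmin Hx. apply NNPP. intros N.
  set (Y := remove deq x X).
  assert (InX : forall a, In a X -> a = x \/ In a Y).
  { intros a Ha. destruct (deq a x); auto. right. apply in_in_remove; auto. }
  assert (InY : forall a, In a Y -> In a X) by (intros a Ha; apply (in_remove deq X a x Ha)).
  assert (HY : separates Y W).
  { intros w Hw Hs.
    destruct (ray_beyond r0 X r0inj) as [M HM].
    destruct (sepa_large Y w M Hs) as [m [Lm [Hm H]]].
    assert (Ht : ~ In (r0 m) X) by (apply HM; auto).
    assert (G : forall u t, conn_avoid adj Y u t -> ~ In t X ->
      conn_avoid adj X u t \/ exists z, adj x z /\ conn_avoid adj X z t).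
    { intros u t C. induction C as [v Hv|u v t Hu Huv C IH]; intros Hn.
      - left. constructor. auto.
      - destruct (IH Hn) as [IH'|IH']; auto.
        destruct (deq u x) as [->|Nu]; [right; eauto|].
        left. econstructor; eauto. intros Hu'. destruct (InX u Hu'); auto. }
    destruct (G w (r0 m) H Ht) as [G1|[z [Hz G2]]].
    - apply (HS w Hw). exists m. split; auto. intros j Hj; apply HM; lia.
    - apply N. exists z. split; auto. exists m. split; auto. intros j Hj; apply HM; lia. }
  pose proof (Hmin Y HY). pose proof (remove_length_lt deq X x Hx). unfold Y in *. lia.
Qed.

Fixpoint ball n : list V := match n with 0 => [r0 0] | S n => ball n ++ flat_map nb (ball n) end.

Lemma r0_ball m : In (r0 m) (ball m).
Proof.
  induction m; simpl; auto. apply in_or_app; right. apply in_flat_map. eauto.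
Qed.

Lemma reach Y u t : conn_avoid adj Y u t -> forall i, In u (ball i) -> exists j, In t (ball j).
Proof.
  induction 1 as [v Hv|u v w Hu Huv H IH]; intros i Hi; eauto.
  apply (IH (S i)). simpl. apply in_or_app; right. apply in_flat_map. eauto.
Qed.

Lemma ball_S n : incl (ball n) (ball (S n)).
Proof. intros a Ha; simpl; apply in_or_app; auto. Qed.


Variable msep : list V -> list V.
Hypothesis Hmsep : forall W, separates (msep W) W /\ NoDup (msep W) /\
  forall Y, separates Y W -> length (msep W) <= length Y.
Variable F : list V.

Fixpoint X i := msep (match i with 0 => F | S i' => X i' ++ flat_map nb (X i') ++ ball i end).
Definition W i := match i with 0 => F | S i' => X i' ++ flat_map nb (X i') ++ ball i end.

Lemma XW i : X i = msep (W i).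
Proof. destruct i; reflexivity. Qed.

Lemma XP1 i : separates (X i) (W i) /\ NoDup (X i) /\
  forall Y, separates Y (W i) -> length (X i) <= length Y.
Proof. rewrite XW. apply Hmsep. Qed.

Lemma XP3 i v : sepa (X (S i)) v -> sepa (X i) v.
Proof.
  apply nest with (W (S i)); [apply XP1|]. intros a Ha. simpl. apply in_or_app; auto.
Qed.

Lemma XP3' i j v : i <= j -> sepa (X j) v -> sepa (X i) v.
Proof.
  induction 1; auto. intros H'. apply IHle. apply XP3; auto.
Qed.

Lemma XP5 i x : In x (X i) -> ~ sepa (X (S i)) x.
Proof. intros Hx. apply XP1. simpl. apply in_or_app; auto. Qed.

Lemma XP4 i x : In x (X (S i)) -> sepa (X i) x.
Proof.
  intros Hx. destruct (XP1 (S i)) as [HS [_ Hmin]].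
  destruct (min_adj (W (S i)) (X (S i)) x HS Hmin Hx) as [y [Hxy Hy]].
  destruct (dP (In x (X i))) as [Hxi|Hxi].
  - exfalso. apply (HS y); auto. simpl. apply in_or_app; right; apply in_or_app; left.
    apply in_flat_map. eauto.
  - apply sepa_step with y; auto. apply XP3; auto.
Qed.

Lemma XP6 v : exists n, ~ sepa (X n) v.
Proof.
  destruct (dP (sepa (X 0) v)) as [H|H]; [|eauto].
  destruct H as [m [_ H]]. apply ca_sym in H; auto.
  destruct (reach _ _ _ H m (r0_ball m)) as [j Hj].
  exists (S j). apply (proj1 (XP1 (S j))).
  change (In v (X j ++ flat_map nb (X j) ++ ball (S j))).
  apply in_or_app; right; apply in_or_app; right. apply ball_S; auto.
Qed.

Lemma XP6' (Sx : list V) : exists n, forall s, In s Sx -> ~ sepa (X n) s.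
Proof.
  induction Sx as [|a Sx [n IH]]; [exists 0; intros _ []|].
  destruct (XP6 a) as [na Ha]. exists (max n na). intros s [<-|Hs] Hc.
  - apply Ha. apply XP3' with (max n na); auto; lia.
  - apply (IH s Hs). apply XP3' with (max n na); auto; lia.
Qed.

Lemma stage_hyp i : forall Y, length Y < length (X i) ->
  exists w, AB adj (X i) (X (S i)) w /\ avoid w Y.
Proof.
  intros Y L. apply NNPP. intros N.
  assert (HY : separates Y (W i)).
  { intros w0 Hw0 Hs.
    destruct (ray_beyond r0 (X i ++ X (S i)) r0inj) as [M HM].
    destruct (sepa_large Y w0 M Hs) as [m [Lm [Hm H]]].
    destruct (hit Y (X i) w0 (r0 m) H) as [H'|[x [Hx [_ H2]]]].
    - apply (proj1 (XP1 i) w0 Hw0). exists m. split; auto.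
      intros j Hj Hin. apply (HM j); [lia|apply in_or_app; auto].
    - destruct (hit Y (X (S i)) x (r0 m) H2) as [H''|[x' [Hx' [H3 _]]]].
      + apply (XP5 i x Hx). exists m. split; auto.
        intros j Hj Hin. apply (HM j); [lia|apply in_or_app; auto].
      + destruct (ca_walk adj Y x x' H3) as [h [t [Wt [E A]]]].
        apply N. exists (x :: t). split; auto. split; auto. split; eauto. }
  pose proof (proj2 (proj2 (XP1 i)) Y HY). lia.
Qed.

Definition Good i x p := NoDup p /\ wk adj p /\ (exists t, p = x :: t /\ avoid t (X i)) /\
  (exists h b, p = h ++ [b] /\ In b (X (S i)) /\ avoid h (X (S i))).

Lemma stage i : exists P : V -> list V, (forall x, In x (X i) -> Good i x (P x)) /\
  (forall x y, In x (X i) -> In y (X i) -> x <> y -> forall v, In v (P x) -> ~ In v (P y)).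
Proof.
  destruct (mengerG adj adj_sym adj_irr _ _ _ (stage_hyp i)) as [F0 [L HF]].
  destruct (choice_fun (fun w p => In w F0 -> incl p w /\ NoDup p /\ wk adj p /\
     (exists a t, p = a :: t /\ In a (X i) /\ avoid t (X i)) /\
     (exists h b, p = h ++ [b] /\ In b (X (S i)) /\ avoid h (X (S i))))) as [sh Hsh].
  { intros w. destruct (dP (In w F0)) as [Hw|Hw]; [|exists w; intro; contradiction].
    destruct (shrink adj _ _ w (proj2 (proj2 HF) w Hw)) as [p Hp]. exists p; auto. }
  set (F' := map sh F0).
  assert (HF' : fam adj (X i) (X (S i)) F').
  { apply fam_map with adj (X i) (X (S i)); auto.
    - intros w Hw. destruct (Hsh w Hw) as [_ [_ [Wp [[a [t [E [Ha _]]]] [h [b [E' [Hb _]]]]]]]].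
      split; auto. split; eauto.
    - intros w1 w2 H1 H2 N v Hv1 Hv2. apply (proj1 (proj2 HF) w1 w2 H1 H2 N v).
      + apply (proj1 (Hsh w1 H1)); auto.
      + apply (proj1 (Hsh w2 H2)); auto. }
  assert (Cov := fam_cover adj _ _ F' HF' (proj1 (proj2 (XP1 i)))).
  destruct (choice_fun (fun x p => In x (X i) -> In p F' /\ exists t, p = x :: t)) as [P HP].
  { intros x. destruct (dP (In x (X i))) as [Hx|Hx]; [|exists []; intro; contradiction].
    destruct (Cov) with x as [p [t [Hp E]]]; auto.
    - unfold F'. rewrite length_map. lia.
    - exists p. intros _. eauto. }
  exists P. split.
  - intros x Hx. destruct (HP x Hx) as [Hp [t Et]].
    unfold F' in Hp. apply in_map_iff in Hp as [w [Ew Hw]].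
    destruct (Hsh w Hw) as [_ [ND [Wp [[a [t' [E [Ha At]]]] Hl]]]].
    rewrite Ew in ND, Wp, E, Hl. split; auto. split; auto. split; auto.
    exists t. split; auto. rewrite Et in E. inversion E; subst. auto.
  - intros x y Hx Hy N v Hvx Hvy.
    destruct (HP x Hx) as [Hpx [tx Ex]]. destruct (HP y Hy) as [Hpy [ty Ey]].
    assert (NE : P x <> P y) by (rewrite Ex, Ey; intros E; inversion E; auto).
    apply (proj1 (proj2 HF') (P x) (P y) Hpx Hpy NE v); auto.
Qed.


Variable P : nat -> V -> list V.
Hypothesis HPg : forall i x, In x (X i) -> Good i x (P i x).
Hypothesis HPd : forall i x y, In x (X i) -> In y (X i) -> x <> y ->
  forall v, In v (P i x) -> ~ In v (P i y).

Lemma wk_tl (R : V -> V -> Prop) a l : wk R (a :: l) -> l <> [] -> wk R l.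
Proof. intros W N. inversion W; subst; auto. congruence. Qed.

Lemma wk_init (R : V -> V -> Prop) l b : wk R (l ++ [b]) -> l <> [] -> wk R l.
Proof.
  intros W N. destruct (exists_last N) as [l' [c ->]].
  apply wk_splitl with [b]. rewrite <- app_assoc in W. exact W.
Qed.

Lemma back X' b : forall l, wk adj (l ++ [b]) -> avoid l X' -> sepa X' b -> forall v, In v l -> sepa X' v.
Proof.
  induction l as [|a l IH]; intros W A Hb v Hv; [destruct Hv|].
  assert (IH' : forall v, In v l -> sepa X' v).
  { apply IH; [apply wk_tl with a; [exact W|destruct l; discriminate]
      | intros u Hu; apply A; simpl; auto | exact Hb]. }
  destruct Hv as [<-|Hv]; auto.
  destruct l as [|c l]; simpl in W; inversion W; subst.
  - apply sepa_step with b; auto. apply A; simpl; auto.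
  - apply sepa_step with c; auto; [apply A; simpl; auto|apply IH'; simpl; auto].
Qed.

Lemma fwd X' : forall l a, wk adj (a :: l) -> avoid (a :: l) X' -> ~ sepa X' a ->
  forall v, In v (a :: l) -> ~ sepa X' v.
Proof.
  induction l as [|c l IH]; intros a W A Ha v Hv.
  - destruct Hv as [<-|[]]; auto.
  - inversion W; subst. destruct Hv as [<-|Hv]; auto.
    apply (IH c); auto.
    + intros u Hu; apply A; simpl; auto.
    + intros Hc. apply Ha. apply sepa_step with c; auto. apply A; simpl; auto.
Qed.

Lemma P_tail i x : In x (X i) -> exists t, P i x = x :: t /\ t <> [] /\
  forall v, In v t -> sepa (X i) v /\ ~ sepa (X (S i)) v.
Proof.
  intros Hx. destruct (HPg i x Hx) as [ND [Wp [[t [Et At]] [h [b [Eh [Hb Ah]]]]]]].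
  assert (Nt : t <> []).
  { intros ->. rewrite Et in Eh. destruct h as [|? [|]]; simpl in Eh; inversion Eh; subst.
    apply (sepa_notin _ _ (XP4 i b Hb)); auto. }
  destruct h as [|x' h']; [rewrite Et in Eh; simpl in Eh; inversion Eh; contradiction|].
  rewrite Et in Eh. simpl in Eh. inversion Eh; subst x' t.
  exists (h' ++ [b]). split; auto. split; auto. intros v Hv. split.
  - apply in_app_or in Hv as [Hv|[<-|[]]]; [|apply XP4; auto].
    apply (back (X i) b h'); auto.
    + rewrite Et in Wp. apply wk_tl with x; auto.
    + intros u Hu; apply At, in_or_app; auto.
    + apply XP4; auto.
  - apply in_app_or in Hv as [Hv|[<-|[]]]; [|intros Hs; apply (sepa_notin _ _ Hs); auto].
    apply (fwd (X (S i)) h' x); simpl; auto.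
    + apply wk_init with b; [|discriminate]. rewrite Et in Wp. exact Wp.
    + apply XP5; auto.
Qed.

Fixpoint s (x : V) (i : nat) : V := match i with 0 => x | S i => last (P i (s x i)) x end.

Lemma s_in x : In x (X 0) -> forall i, In (s x i) (X i).
Proof.
  intros Hx. induction i as [|i IH]; simpl; auto.
  destruct (HPg i _ IH) as [_ [_ [_ [h [b [E [Hb _]]]]]]]. rewrite E, last_last. auto.
Qed.

Lemma s_inj x y : In x (X 0) -> In y (X 0) -> x <> y -> forall i, s x i <> s y i.
Proof.
  intros Hx Hy N. induction i as [|i IH]; simpl; auto.
  destruct (HPg i _ (s_in x Hx i)) as [_ [_ [_ [h [b [E _]]]]]].
  destruct (HPg i _ (s_in y Hy i)) as [_ [_ [_ [h' [b' [E' _]]]]]].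
  rewrite E, E', !last_last. intros ->.
  apply (HPd i (s x i) (s y i) (s_in x Hx i) (s_in y Hy i) IH b').
  - rewrite E. apply in_or_app; simpl; auto.
  - rewrite E'. apply in_or_app; simpl; auto.
Qed.

Definition step (st : nat * list V) : nat * list V :=
  match snd st with
  | v :: nil => (S (fst st), tl (P (S (fst st)) v))
  | v :: l' => (fst st, l')
  | nil => st
  end.

Definition st x t := Nat.iter t step (0, P 0 x).

Definition Inv x (stt : nat * list V) := exists pre, P (fst stt) (s x (fst stt)) = pre ++ snd stt /\
  snd stt <> [] /\ (0 < fst stt -> pre <> []).

Definition Rel (a b : nat * list V) := fst a < fst b \/
  (fst a = fst b /\ exists m, m <> [] /\ snd a = m ++ snd b).

Lemma Rel_trans a b c : Rel a b -> Rel b c -> Rel a c.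
Proof.
  unfold Rel. intros [H1|[H1 [m1 [N1 E1]]]] [H2|[H2 [m2 [N2 E2]]]]; try (left; lia).
  right. split; [lia|]. exists (m1 ++ m2). split.
  - destruct m1; [congruence|discriminate].
  - rewrite E1, E2, app_assoc; auto.
Qed.

Lemma Inv_step x stt : In x (X 0) -> Inv x stt -> Inv x (step stt) /\ Rel stt (step stt).
Proof.
  intros Hx [pre [E [Ne Hp]]]. destruct stt as [i l]. simpl in *.
  destruct l as [|v [|w l]]; [congruence| |].
  - unfold step; simpl.
    assert (Hs : s x (S i) = v) by (simpl; rewrite E, last_last; auto).
    destruct (P_tail (S i) (s x (S i)) (s_in x Hx (S i))) as [t [Et [Nt _]]].
    split; [|left; simpl; lia].
    exists [v]. simpl. rewrite <- Hs, Et. simpl. split; auto. split; auto. discriminate.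
  - unfold step; simpl. split.
    + exists (pre ++ [v]). simpl. split; [rewrite E, <- app_assoc; auto|].
      split; [discriminate|]. intros _. destruct pre; discriminate.
    + right. simpl. split; auto. exists [v]. split; [discriminate|auto].
Qed.

Lemma st_S x t : st x (S t) = step (st x t).
Proof. reflexivity. Qed.

Lemma Inv_st x : In x (X 0) -> forall t, Inv x (st x t).
Proof.
  intros Hx. induction t as [|t IH].
  - exists []. unfold st; simpl. destruct (P_tail 0 x Hx) as [t [Et [Nt _]]].
    split; auto. split; [rewrite Et; discriminate|]. lia.
  - rewrite st_S. apply (proj1 (Inv_step x _ Hx IH)).
Qed.

Lemma st_rel x : In x (X 0) -> forall t1 t2, t1 < t2 -> Rel (st x t1) (st x t2).
Proof.
  intros Hx t1 t2 L. induction L as [|t2 L IH].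
  - rewrite st_S. apply (proj2 (Inv_step x _ Hx (Inv_st x Hx t1))).
  - rewrite st_S. apply Rel_trans with (st x t2); auto. apply (proj2 (Inv_step x _ Hx (Inv_st x Hx t2))).
Qed.

Definition Ry x t := hd x (snd (st x t)).

Lemma vfact x t : In x (X 0) ->
  In (Ry x t) (P (fst (st x t)) (s x (fst (st x t)))) /\
  ~ sepa (X (S (fst (st x t)))) (Ry x t) /\
  (0 < fst (st x t) -> sepa (X (fst (st x t))) (Ry x t)).
Proof.
  intros Hx. destruct (Inv_st x Hx t) as [pre [E [Ne Hp]]]. unfold Ry.
  destruct (st x t) as [i l]. simpl in *. destruct l as [|v l]; [congruence|]. simpl.
  destruct (P_tail i (s x i) (s_in x Hx i)) as [t' [Et [Nt Reg]]].
  split; [rewrite E; apply in_or_app; simpl; auto|].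
  destruct pre as [|a pre].
  - simpl in E. rewrite Et in E. inversion E; subst v.
    split; [apply XP5, s_in; auto|]. intros L. exfalso; apply Hp; auto.
  - simpl in E. rewrite Et in E. inversion E; subst.
    assert (Hv : In v (pre ++ v :: l)) by (apply in_or_app; simpl; auto).
    destruct (Reg v Hv). split; auto.
Qed.

Lemma NoDup_app_disj (a b : list V) v : NoDup (a ++ b) -> In v a -> ~ In v b.
Proof.
  induction a as [|c a IH]; intros ND Ha Hb; [destruct Ha|].
  inversion ND; subst. destruct Ha as [<-|Ha].
  - apply H1. apply in_or_app; auto.
  - apply (IH H2 Ha Hb).
Qed.

Lemma Ry_inj x : In x (X 0) -> forall t1 t2, Ry x t1 = Ry x t2 -> t1 = t2.
Proof.
  intros Hx.
  assert (K : forall t1 t2, t1 < t2 -> Ry x t1 <> Ry x t2).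
  { intros t1 t2 L E. destruct (st_rel x Hx t1 t2 L) as [Lt|[Eq [m [Nm Em]]]].
    - destruct (vfact x t1 Hx) as [_ [N1 _]]. destruct (vfact x t2 Hx) as [_ [_ S2]].
      apply N1. rewrite E. apply XP3' with (fst (st x t2)); [lia|]. apply S2. lia.
    - destruct (Inv_st x Hx t1) as [pre [E1 [Ne1 _]]].
      destruct (Inv_st x Hx t2) as [_ [_ [Ne2 _]]].
      destruct (HPg _ _ (s_in x Hx (fst (st x t1)))) as [ND _].
      rewrite E1, Em in ND. apply NoDup_app_remove_l in ND.
      unfold Ry in E. rewrite Em in E.
      destruct m as [|a m]; [congruence|]. destruct (snd (st x t2)) as [|b l]; [congruence|].
      simpl in E. subst b.
      apply (NoDup_app_disj (a :: m) (a :: l) a ND); simpl; auto. }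
  intros t1 t2 E. destruct (lt_eq_lt_dec t1 t2) as [[L|L]|L]; auto.
  - exfalso; apply (K t1 t2 L E).
  - exfalso; apply (K t2 t1 L); auto.
Qed.

Lemma Ry_disj x y : In x (X 0) -> In y (X 0) -> x <> y -> forall t1 t2, Ry x t1 <> Ry y t2.
Proof.
  intros Hx Hy N t1 t2 E.
  destruct (vfact x t1 Hx) as [I1 [N1 S1]]. destruct (vfact y t2 Hy) as [I2 [N2 S2]].
  destruct (lt_eq_lt_dec (fst (st x t1)) (fst (st y t2))) as [[L|L]|L].
  - apply N1. rewrite E. apply XP3' with (fst (st y t2)); [lia|]. apply S2. lia.
  - rewrite <- L in I2. apply (HPd _ (s x _) (s y _) (s_in x Hx _) (s_in y Hy _) (s_inj x y Hx Hy N _)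
      (Ry x t1) I1). rewrite E; auto.
  - apply N2. rewrite <- E. apply XP3' with (fst (st x t1)); [lia|]. apply S1. lia.
Qed.

Lemma Ry_adj x : In x (X 0) -> forall t, adj (Ry x t) (Ry x (S t)).
Proof.
  intros Hx t. unfold Ry. rewrite st_S.
  destruct (Inv_st x Hx t) as [pre [E [Ne _]]].
  destruct (st x t) as [i l]. simpl in *. destruct l as [|v [|w l]]; [congruence| |].
  - unfold step. simpl.
    assert (Hs : s x (S i) = v) by (simpl; rewrite E, last_last; auto).
    destruct (HPg (S i) _ (s_in x Hx (S i))) as [_ [Wp _]].
    destruct (P_tail (S i) (s x (S i)) (s_in x Hx (S i))) as [t' [Et [Nt _]]].
    rewrite Hs in Et, Wp. rewrite Et in Wp |- *. simpl.
    destruct t' as [|c t']; [congruence|]. inversion Wp; subst; auto.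
  - unfold step; simpl. destruct (HPg i _ (s_in x Hx i)) as [_ [Wp _]].
    rewrite E in Wp. apply wk_splitr in Wp. inversion Wp; auto.
Qed.

Lemma stage_mono x : In x (X 0) -> forall t1 t2, t1 <= t2 -> fst (st x t1) <= fst (st x t2).
Proof.
  intros Hx t1 t2 L. destruct (proj1 (Nat.lt_eq_cases _ _) L) as [L'|<-]; auto.
  destruct (st_rel x Hx t1 t2 L') as [|[E _]]; lia.
Qed.

Lemma finish_stage x : In x (X 0) -> forall l i, Inv x (i, l) ->
  fst (Nat.iter (length l) step (i, l)) = S i.
Proof.
  intros Hx. induction l as [|v l IH]; intros i Hinv.
  - destruct Hinv as [_ [_ [N _]]]. simpl in N. congruence.
  - destruct l as [|w l].
    + reflexivity.
    + change (length (v :: w :: l)) with (S (length (w :: l))). rewrite Nat.iter_succ_r.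
      assert (Es : step (i, v :: w :: l) = (i, w :: l)) by reflexivity.
      rewrite Es. apply IH. rewrite <- Es. apply Inv_step; auto.
Qed.

Lemma reach_stage x : In x (X 0) -> forall n, exists t0, forall t, t0 <= t -> n <= fst (st x t).
Proof.
  intros Hx. induction n as [|n [t0 IH]]; [exists 0; intros; lia|].
  destruct (proj1 (Nat.lt_eq_cases _ _) (IH t0 (le_n _))) as [L|E].
  - exists t0. intros t Ht. pose proof (stage_mono x Hx t0 t Ht). lia.
  - exists (length (snd (st x t0)) + t0). intros t Ht.
    assert (Hf : fst (st x (length (snd (st x t0)) + t0)) = S n).
    { unfold st at 1. rewrite Nat.iter_add. fold (st x t0).
      pose proof (Inv_st x Hx t0) as Hi. destruct (st x t0) as [i l]. simpl in *.
      rewrite (finish_stage x Hx l i Hi). lia. }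
    pose proof (stage_mono x Hx _ _ Ht). lia.
Qed.

Lemma Ry_end x : In x (X 0) -> forall Sx, exists K, forall a b, K <= a -> K <= b ->
  conn_avoid adj Sx (r0 a) (Ry x b).
Proof.
  intros Hx Sx. destruct (XP6' Sx) as [n Hn].
  destruct (reach_stage x Hx (S n)) as [t0 Ht0].
  destruct (ray_beyond r0 (X n) r0inj) as [M HM].
  exists (max t0 M). intros a b Ha Hb.
  apply sepa_transfer with (X n); auto.
  - apply sepa_r0. intros j Hj; apply HM; lia.
  - pose proof (Ht0 b ltac:(lia)). destruct (vfact x b Hx) as [_ [_ S2]].
    apply XP3' with (fst (st x b)); [lia|]. apply S2. lia.
Qed.

Theorem KL_core k : (forall Y, length Y <= k -> ~ separates Y F) ->
  exists f : nat -> nat -> V,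
   (forall i, i < S k -> (forall n m, f i n = f i m -> n = m) /\ (forall n, adj (f i n) (f i (S n))) /\
      forall Sx, exists K, forall a b, K <= a -> K <= b -> conn_avoid adj Sx (r0 a) (f i b)) /\
   (forall i j, i < S k -> j < S k -> i <> j -> forall n m, f i n <> f j m).
Proof.
  intros H.
  assert (L : S k <= length (X 0)).
  { destruct (le_lt_dec (S k) (length (X 0))) as [|L]; auto. exfalso.
    apply (H (X 0)); [lia|]. apply (proj1 (XP1 0)). }
  assert (ND := proj1 (proj2 (XP1 0))).
  exists (fun i => Ry (nth i (X 0) (r0 0))). split.
  - intros i Hi. assert (Hin : In (nth i (X 0) (r0 0)) (X 0)) by (apply nth_In; lia).
    split; [apply Ry_inj; auto|]. split; [apply Ry_adj; auto|apply Ry_end; auto].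
  - intros i j Hi Hj N n m. apply Ry_disj; try (apply nth_In; lia).
    intros E. apply N. apply (proj1 (NoDup_nth (X 0) (r0 0)) ND); auto; lia.
Qed.

End Ends.

Theorem KL {V : Type} (adj : V -> V -> Prop)
  (adj_sym : forall u v, adj u v -> adj v u) (adj_irr : forall v, ~ adj v v)
  (nb : V -> list V) (hnb : forall v w, adj v w -> In w (nb v))
  (r0 : nat -> V) (r0inj : forall n m, r0 n = r0 m -> n = m)
  (r0adj : forall n, adj (r0 n) (r0 (S n))) (k : nat) (F : list V) :
  ~ (exists f : nat -> nat -> V,
   (forall i, i < S k -> (forall n m, f i n = f i m -> n = m) /\ (forall n, adj (f i n) (f i (S n))) /\
      forall Sx, exists K, forall a b, K <= a -> K <= b -> conn_avoid adj Sx (r0 a) (f i b)) /\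
   (forall i j, i < S k -> j < S k -> i <> j -> forall n m, f i n <> f j m)) ->
  exists S, length S <= k /\ exists M, forall f, In f F -> forall j, M <= j -> ~ conn_avoid adj S f (r0 j).
Proof.
  intros NF.
  destruct (choice_fun (fun W X => separates adj r0 X W /\ NoDup X /\
     (forall Y, separates adj r0 Y W -> length X <= length Y)) (minsep_ex adj r0 r0inj)) as [msep Hmsep].
  destruct (choice_fun (fun i (P : V -> list V) =>
     (forall x, In x (X nb r0 msep F i) -> Good adj nb r0 msep F i x (P x)) /\
     (forall x y, In x (X nb r0 msep F i) -> In y (X nb r0 msep F i) -> x <> y ->
        forall v, In v (P x) -> ~ In v (P y)))
     (stage adj adj_sym adj_irr nb r0 r0inj r0adj msep Hmsep F)) as [P HP].
  destruct (dP (exists Y, length Y <= k /\ separates adj r0 Y F)) as [[Y [LY HY]]|N].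
  - exists Y. split; auto. destruct (ray_beyond r0 Y r0inj) as [M HM].
    exists M. intros f Hf j Hj C. apply (HY f Hf). exists j. split; auto.
    intros j' Hj'; apply HM; lia.
  - exfalso. apply NF. apply (KL_core adj adj_sym nb hnb r0 r0inj r0adj msep Hmsep F P
      (fun i => proj1 (HP i)) (fun i => proj2 (HP i)) k).
    intros Y LY HY. apply N; eauto.
Qed.

Definition ray_equiv' {V : Type} (R : V -> V -> Prop) (r1 r2 : nat -> V) :=
  forall S : list V, exists k, forall n m, k <= n -> k <= m -> conn_avoid R S (r1 n) (r2 m).

Definition kdr' {V : Type} (alpha : (nat -> V) -> Prop) (k : nat) :=
  exists f : nat -> nat -> V, (forall i, i < k -> alpha (f i)) /\
    (forall i j, i < k -> j < k -> i <> j -> forall n m, f i n <> f j m).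

Section RE.
Context {V : Type}.
Variable R : V -> V -> Prop.
Hypothesis R_sym : forall u v, R u v -> R v u.

Lemma re_trans r1 r2 r3 : ray_equiv' R r1 r2 -> ray_equiv' R r2 r3 -> ray_equiv' R r1 r3.
Proof.
  intros H1 H2 S. destruct (H1 S) as [k1 K1]. destruct (H2 S) as [k2 K2].
  exists (max k1 k2). intros n m Hn Hm. apply ca_trans with (r2 (max k1 k2)).
  - apply K1; lia.
  - apply K2; lia.
Qed.

Lemma re_sym r1 r2 : ray_equiv' R r1 r2 -> ray_equiv' R r2 r1.
Proof.
  intros H S. destruct (H S) as [k K]. exists k. intros n m Hn Hm. apply ca_sym; auto.
Qed.

Lemma ray_conn (r : nat -> V) Sx M : (forall n, R (r n) (r (S n))) ->
  (forall j, M <= j -> ~ In (r j) Sx) -> forall n m, M <= n -> M <= m -> conn_avoid R Sx (r n) (r m).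
Proof.
  intros Hr HS n m Hn Hm.
  assert (G : forall a b, M <= a -> a <= b -> conn_avoid R Sx (r a) (r b)).
  { intros a b Ha Hab. replace b with (a + (b - a)) by lia. apply ray_seg; auto.
    intros j Hj; apply HS; lia. }
  destruct (le_lt_dec n m); [apply G; auto|]. apply ca_sym; auto. apply G; lia.
Qed.

Lemma re_refl r : is_ray R r -> ray_equiv' R r r.
Proof.
  intros [Hi Ha] S. destruct (ray_beyond r S Hi) as [M HM]. exists M.
  apply ray_conn; auto.
Qed.

End RE.

Section Prod.
Context {V T : Type}.
Variable adj : V -> V -> Prop.
Hypothesis adj_sym : forall u v, adj u v -> adj v u.
Hypothesis adj_irr : forall v, ~ adj v v.
Variable nb : V -> list V.
Hypothesis hnb : forall v w, adj v w -> In w (nb v).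
Variable eT : T -> T -> Prop.
Hypothesis eT_sym : forall a b, eT a b -> eT b a.
Variable lT : list T.
Hypothesis lT_nd : NoDup lT.
Hypothesis lT_all : forall t, In t lT.
Hypothesis Dconn : forall a b, conn_avoid eT [] a b.
Variable cadj : V * T -> V * T -> Prop.
Hypothesis hc : forall p q, cadj p q <-> (fst p = fst q /\ eT (snd p) (snd q)) \/ (adj (fst p) (fst q) /\ snd p = snd q).
Variable x0 : T.
Variable alpha : (nat -> V) -> Prop.
Variable alpha' : (nat -> V * T) -> Prop.
Variable r0 : nat -> V.
Variable r0' : nat -> V * T.
Hypothesis r0ray : is_ray adj r0.
Hypothesis halpha : forall r, alpha r <-> is_ray adj r /\ ray_equiv' adj r0 r.
Hypothesis halpha' : forall r, alpha' r <-> is_ray cadj r /\ ray_equiv' cadj r0' r.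
Hypothesis hcopy : forall r, alpha r -> alpha' (fun n => (r n, x0)).

Lemma cadj_sym p q : cadj p q -> cadj q p.
Proof. rewrite !hc. intros [[E H]|[H E]]; [left|right]; split; auto. Qed.

Lemma fibre v a b Sx : conn_avoid eT [] a b -> (forall t, ~ In (v, t) Sx) ->
  conn_avoid cadj Sx (v, a) (v, b).
Proof.
  intros C HS. induction C as [c _|c d f _ Hcd _ IH].
  - constructor; auto.
  - econstructor; [apply HS| |exact IH]. apply hc. left; simpl; auto.
Qed.

Lemma copy_ray r : is_ray adj r -> forall y, is_ray cadj (fun n => (r n, y)).
Proof.
  intros [Hi Ha] y. split.
  - intros n m E. inversion E. auto.
  - intros n. apply hc. right. simpl. auto.
Qed.

Lemma shift_equiv r : is_ray adj r -> forall y, ray_equiv' cadj (fun n => (r n, x0)) (fun n => (r n, y)).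
Proof.
  intros Hr y Sx. destruct Hr as [Hi Ha].
  destruct (ray_beyond r (map fst Sx) Hi) as [M HM].
  assert (HS : forall j, M <= j -> forall t, ~ In (r j, t) Sx).
  { intros j Hj t Hin. apply (HM j Hj). change (r j) with (fst (r j, t)). apply in_map; auto. }
  exists M. intros n m Hn Hm. apply ca_trans with (r m, x0).
  - apply (ray_conn cadj cadj_sym (fun n => (r n, x0)) Sx M).
    + apply (proj2 (copy_ray r (conj Hi Ha) x0)).
    + intros j Hj; apply HS; auto.
    + auto.
    + auto.
  - apply fibre; auto.
Qed.

Lemma alpha'_shift r y : alpha r -> alpha' (fun n => (r n, y)).
Proof.
  intros Ha. assert (Hr : is_ray adj r) by (apply halpha; auto).
  apply halpha'. split; [apply copy_ray; auto|].
  apply (re_trans cadj) with (fun n => (r n, x0)); [|apply shift_equiv; auto].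
  apply halpha', hcopy; auto.
Qed.

Lemma lower k : kdr' alpha k -> kdr' alpha' (k * length lT).
Proof.
  intros [f [Hf Hd]].
  assert (L0 : length lT <> 0) by (destruct lT; [destruct (lT_all x0)|discriminate]).
  set (L := length lT) in *.
  exists (fun i n => (f (i / L) n, nth (i mod L) lT x0)). split.
  - intros i Hi. apply alpha'_shift. apply Hf. apply Nat.Div0.div_lt_upper_bound; lia.
  - intros i j Hi Hj N n m E. inversion E as [[E1 E2]].
    destruct (Nat.eq_dec (i / L) (j / L)) as [D|D].
    + assert (i mod L <> j mod L).
      { intros M. apply N. rewrite (Nat.div_mod i L L0), (Nat.div_mod j L L0), D, M. auto. }
      apply H. apply (proj1 (NoDup_nth lT x0) lT_nd); auto; apply Nat.mod_upper_bound; auto.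
    + apply (Hd (i / L) (j / L)) with n m; auto; apply Nat.Div0.div_lt_upper_bound; lia.
Qed.

Lemma copy k : kdr' alpha k -> kdr' alpha' k.
Proof.
  intros [f [Hf Hd]]. exists (fun i n => (f i n, x0)). split.
  - intros i Hi. apply hcopy; auto.
  - intros i j Hi Hj N n m E. inversion E. apply (Hd i j Hi Hj N n m); auto.
Qed.

Lemma proj_conn S p q : conn_avoid cadj (list_prod S lT) p q -> conn_avoid adj S (fst p) (fst q).
Proof.
  assert (NI : forall p, ~ In p (list_prod S lT) -> ~ In (fst p) S).
  { intros [a b] Hp Ha. apply Hp. apply in_prod; auto. }
  induction 1 as [p Hp|p q w Hp Hpq _ IH].
  - constructor. apply NI; auto.
  - apply hc in Hpq as [[E _]|[A _]].
    + rewrite E; auto.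
    + econstructor; eauto.
Qed.

Lemma upper k : ~ kdr' alpha (S k) -> ~ kdr' alpha' (S (k * length lT)).
Proof.
  intros Nk [g [Hg Hd]].
  destruct r0ray as [r0inj r0adj].
  set (F := map (fun i => fst (g i 0)) (seq 0 (S (k * length lT)))).
  destruct (KL adj adj_sym adj_irr nb hnb r0 r0inj r0adj k F) as [Sl [LS [M HM]]].
  { intros [f [Hf Hfd]]. apply Nk. exists f. split; auto.
    intros i Hi. destruct (Hf i Hi) as [H1 [H2 H3]]. apply halpha. split; [split; auto|exact H3]. }
  set (S' := list_prod Sl lT).
  assert (Hit : forall i, i < S (k * length lT) -> exists n, In (g i n) S').
  { intros i Hi. apply NNPP. intros N.
    destruct (proj1 (halpha' (g i)) (Hg i Hi)) as [[gi ga] Heq].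
    assert (Hc := proj1 (halpha' _) (hcopy r0 (proj2 (halpha r0) (conj r0ray (re_refl adj adj_sym r0 r0ray))))).
    destruct Hc as [_ Hc].
    assert (E := re_trans cadj _ _ _ (re_sym cadj cadj_sym _ _ Hc) Heq).
    destruct (E S') as [K HK].
    set (a := max K M).
    assert (C1 : conn_avoid cadj S' (g i 0) (g i K)).
    { apply (ray_conn cadj cadj_sym (g i) S' 0); auto; try lia. intros j _ Hj; apply N; eauto. }
    assert (C2 : conn_avoid cadj S' (g i 0) (r0 a, x0)).
    { apply ca_trans with (g i K); auto. apply ca_sym; [apply cadj_sym|]. apply HK; lia. }
    apply proj_conn in C2. simpl in C2.
    apply (HM (fst (g i 0))) with a; auto; [|lia].
    unfold F. apply in_map_iff. exists i. split; [reflexivity|apply in_seq; lia]. }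
  destruct (choice_fun (fun i n => i < S (k * length lT) -> In (g i n) S')) as [nf Hnf].
  { intros i. destruct (dP (i < S (k * length lT))) as [Hi|Hi].
    - destruct (Hit i Hi) as [n Hn]. eauto.
    - exists 0. intro; contradiction. }
  set (Q := map (fun i => g i (nf i)) (seq 0 (S (k * length lT)))).
  assert (NDQ : NoDup Q).
  { apply NoDup_map_on; [apply seq_NoDup|]. intros i j Hi Hj E.
    apply in_seq in Hi. apply in_seq in Hj.
    destruct (Nat.eq_dec i j); auto. exfalso. apply (Hd i j) with (nf i) (nf j); auto; lia. }
  assert (IQ : incl Q S').
  { intros p Hp. unfold Q in Hp. apply in_map_iff in Hp as [i [<- Hi]].
    apply in_seq in Hi. apply Hnf. lia. }
  pose proof (NoDup_incl_length NDQ IQ).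
  unfold Q, S' in H. rewrite length_map, length_seq, length_prod in H.
  pose proof (Nat.mul_le_mono_r _ _ (length lT) LS). lia.
Qed.

End Prod.

End Dev.
Import Dev.
From mathcomp Require Import all_boot.

Lemma re_bridge {V : Type} (R : V -> V -> Prop) r1 r2 : ray_equiv R r1 r2 <-> ray_equiv' R r1 r2.
Proof.
  split; intros H S; destruct (H S) as [k K]; exists k; intros n m Hn Hm; apply K.
  - apply/leP; exact Hn.
  - apply/leP; exact Hm.
  - apply/leP; exact Hn.
  - apply/leP; exact Hm.
Qed.

Lemma kdr_bridge {V : Type} (alpha : (nat -> V) -> Prop) k : k_disjoint_rays alpha k <-> kdr' alpha k.
Proof.
  split; intros [f [H1 H2]]; exists f; split.
  - intros i Hi; apply H1; apply/ltP; exact Hi.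
  - intros i j Hi Hj; apply H2; apply/ltP; assumption.
  - intros i Hi; apply H1; apply/ltP; exact Hi.
  - intros i j Hi Hj; apply H2; apply/ltP; assumption.
Qed.

Lemma in_In (T : eqType) (x : T) (s : seq T) : x \in s -> List.In x s.
Proof.
  elim: s => [|y s IH] //. rewrite in_cons => /orP [/eqP ->|H]; [left|right]; auto.
Qed.

Lemma uniq_NoDup (T : eqType) (s : seq T) : uniq s -> List.NoDup s.
Proof.
  elim: s => [|y s IH] /=; first by constructor.
  move=> /andP [Hy Hs]. constructor; last by apply IH.
  move=> Hin. move: Hy. case: (@idP (y \in s)) => // Hn _. apply Hn.
  clear -Hin. elim: s Hin => [|z s IH] //= [->|H]; rewrite in_cons; apply/orP; [left|right]; auto.
Qed.

Lemma size_length (A : Type) (s : seq A) : size s = length s.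
Proof. by elim: s => //= a s ->. Qed.

Lemma path_conn (T : finType) (e : rel T) x p :
  path e x p -> conn_avoid (fun a b : T => e a b) nil x (last x p).
Proof.
  elim: p x => [|y p IH] x /=; first by move=> _; constructor.
  move=> /andP [Hxy Hp]. econstructor; [by []|exact Hxy|by apply IH].
Qed.

Theorem lemma19 (V : Type) (adj : V -> V -> Prop) (T : finType) (e : rel T) (x0 : T)
  (alpha : (nat -> V) -> Prop) (alpha' : (nat -> V * T) -> Prop) (d : option nat) :
  simple_graph adj -> locally_finite adj -> infinite_graph V ->
  simple_graph (fun x y : T => e x y) -> (forall x y : T, connect e x y) ->
  is_end adj alpha ->
  is_end (cart_adj adj e) alpha' ->
  (forall r, alpha r -> alpha' (fun n => (r n, x0))) ->
  end_degree alpha d ->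
  end_degree alpha' (odeg_mul d #|T|).
Proof.
  move=> [asym airr] lf _ [esym _] hconn [r0 [r0ray Hal]] [r0' [r0'ray Hal']] hcopy Hd.
  have halpha : forall r, alpha r <-> is_ray adj r /\ ray_equiv' adj r0 r.
  { move=> r. rewrite Hal re_bridge. tauto. }
  have halpha' : forall r, alpha' r <-> is_ray (cart_adj adj e) r /\ ray_equiv' (cart_adj adj e) r0' r.
  { move=> r. rewrite Hal' re_bridge. tauto. }
  destruct d as [k|]; simpl in *.
  - destruct Hd as [H1 H2].
    rewrite kdr_bridge in H1. rewrite kdr_bridge in H2.
    have [nb hnb] := choice_fun (fun v l => forall w, adj v w -> List.In w l) lf.
    have lT_nd : List.NoDup (enum T) by apply uniq_NoDup, enum_uniq.
    have lT_all : forall t, List.In t (enum T) by move=> t; apply in_In; rewrite mem_enum.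
    have Dconn : forall a b : T, conn_avoid (fun a b : T => e a b) nil a b.
    { move=> a b. move: (hconn a b) => /connectP [p Hp ->]. by apply path_conn. }
    have hc : forall p q : V * T, cart_adj adj e p q <->
      (fst p = fst q /\ (fun a b : T => e a b) (snd p) (snd q)) \/ (adj (fst p) (fst q) /\ snd p = snd q).
    { move=> p q. reflexivity. }
    have -> : (k * #|T|)%N = Nat.mul k (length (enum T)) by rewrite mulnE cardE size_length.
    split.
    + apply kdr_bridge. apply (lower adj asym (fun a b : T => e a b) esym (enum T) lT_nd lT_all Dconn
        (cart_adj adj e) hc x0 alpha alpha' r0 r0' halpha halpha' hcopy k H1).
    + rewrite kdr_bridge. apply (upper adj asym airr nb hnb (fun a b : T => e a b) esym (enum T) lT_all
        (cart_adj adj e) hc x0 alpha alpha' r0 r0' r0ray halpha halpha' hcopy k H2).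
  - move=> k. apply kdr_bridge. apply (copy x0 alpha alpha' hcopy k). apply kdr_bridge. apply Hd.
Qed.
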